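(* Let $s\ge2$ be an integer. For a positive integer $M$ let $n_k=\lfloor M\sin^2(k\pi/(2s))\rfloor$ for $k=0,\dots,s$. Then there exists $M_0$ such that for all integers $M\ge M_0$: (i) $n_0<n_1<\dots<n_s$ with $n_{k+1}-n_k\ge3$ for all $k$; (ii) the linear system in $x\in\mathbb{R}^{s+1}$ given by $\sum_{k=0}^s(-1)^kx_kn_k^i=0$ for $1\le i\le s-1$, $\sum_{k=0}^s(-1)^kx_k=0$, $\sum_{k=0}^sx_k=2$, has a unique solution, all of whose entries are positive, and $x_k\to\frac2s-\frac1s\delta_{k0}-\frac1s\delta_{ks}$ as $M\to\infty$; (iii) with $\tilde c_k=\sqrt{x_k}$, the vectors $|0_L\rangle=\sum_{k\text{ even}}\tilde c_k|n_k\rangle$ and $|1_L\rangle=\sum_{k\text{ odd}}\tilde c_k|n_k\rangle$ (sums over $0\le k\le s$) are orthonormal, and $P=|0_L\rangle\langle0_L|+|1_L\rangle\langle1_L|$ satisfies $PSP\in\mathbb{R}P$ for all $S\in\mathfrak S_s$; (iv) $\langle0_L|(a^\dagger a)^s|1_L\rangle=0$ and $\big(\langle0_L|(a^\dagger a)^s|0_L\rangle-\langle1_L|(a^\dagger a)^s|1_L\rangle\big)\big/\big((-1)^sM^s4^{1-s}\big)\to1$ as $M\to\infty$. Furthermore, for every $M\ge1$, $2\min_{S\in\mathfrak S_s}\|(a^\dagger a)^s-S\|\le4(M/4)^s$ (operator norm). Consequently the quantum Fisher information $t^2(\langle0_L|(a^\dagger a)^s|0_L\rangle-\langle1_L|(a^\dagger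 a)^s|1_L\rangle)^2$ of this code divided by $4t^2\min_{S\in\mathfrak S_s}\|(a^\dagger a)^s-S\|^2$ tends to $1$ as $M\to\infty$, and both are asymptotic to $16t^2(M/4)^{2s}$.
   Context: Truncated bosonic mode: the Hilbert space is $\mathrm{span}\{|0\rangle,\dots,|M\rangle\}$ with orthonormal Fock states $|m\rangle$, and $a|m\rangle=\sqrt m|m-1\rangle$ ($a|0\rangle=0$), so $a^\dagger a|m\rangle=m|m\rangle$. $\mathfrak S_s$ is the real span of the Hermitian operators $I$, $a+a^\dagger$, $i(a-a^\dagger)$, and $(a^\dagger a)^i$ for $1\le i\le s-1$. $\lfloor x\rfloor$ is the largest integer $\le x$. *)

(* Defs.v *)
From Stdlib Require Import Reals Lra Lia ZArith Bool Arith.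
Open Scope R_scope.

Definition cplx := (R * R)%type.
Definition RtoC (r : R) : cplx := (r, 0).
Definition Ci : cplx := (0, 1).
Definition Cadd (z w : cplx) : cplx := (fst z + fst w, snd z + snd w).
Definition Copp (z : cplx) : cplx := (- fst z, - snd z).
Definition Csub (z w : cplx) : cplx := Cadd z (Copp w).
Definition Cmul (z w : cplx) : cplx :=
  (fst z * fst w - snd z * snd w, fst z * snd w + snd z * fst w).
Definition Cconj (z : cplx) : cplx := (fst z, - snd z).
Definition Cnorm2 (z : cplx) : R := fst z ^ 2 + snd z ^ 2.
Definition Csum (f : nat -> cplx) (n : nat) : cplx :=
  (sum_f_R0 (fun k => fst (f k)) n, sum_f_R0 (fun k => snd (f k)) n).

(** Vectors and operators are given by their coordinates/matrix entries in the
    Fock basis; only indices 0..M are relevant (everything is summed/compared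
    over 0..M only). *)
Definition vec := nat -> cplx.
Definition mat := nat -> nat -> cplx.

Definition madd (A B : mat) : mat := fun i j => Cadd (A i j) (B i j).
Definition msub (A B : mat) : mat := fun i j => Csub (A i j) (B i j).
Definition mscale (c : cplx) (A : mat) : mat := fun i j => Cmul c (A i j).
Definition mmul (M : nat) (A B : mat) : mat :=
  fun i j => Csum (fun k => Cmul (A i k) (B k j)) M.
Definition mid : mat := fun i j => if Nat.eqb i j then RtoC 1 else RtoC 0.
Fixpoint mpow (M : nat) (A : mat) (n : nat) : mat :=
  match n with O => mid | S n' => mmul M A (mpow M A n') end.
Definition mapply (M : nat) (A : mat) (v : vec) : vec :=
  fun i => Csum (fun j => Cmul (A i j) (v j)) M.
Definition inner (M : nat) (u v : vec) : cplx :=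
  Csum (fun m => Cmul (Cconj (u m)) (v m)) M.
Definition vnorm (M : nat) (v : vec) : R := sqrt (sum_f_R0 (fun m => Cnorm2 (v m)) M).
Definition outer (u v : vec) : mat := fun i j => Cmul (u i) (Cconj (v j)).
Definition mat_eq (M : nat) (A B : mat) : Prop :=
  forall i j, (i <= M)%nat -> (j <= M)%nat -> A i j = B i j.
Definition fock (n : nat) : vec := fun m => if Nat.eqb m n then RtoC 1 else RtoC 0.
(** real expectation value <v|A|v> (real for Hermitian A) *)
Definition expval (M : nat) (A : mat) (v : vec) : R := fst (inner M v (mapply M A v)).

(** annihilation operator: a|n> = sqrt n |n-1>, i.e. <m|a|n> = sqrt n if m+1 = n *)
Definition ann : mat := fun m n => if Nat.eqb (S m) n then RtoC (sqrt (INR n)) else RtoC 0.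
Definition adag : mat := fun m n => Cconj (ann n m).
Definition numop (M : nat) : mat := mmul M adag ann.

Definition opnorm (M : nat) (A : mat) (r : R) : Prop :=
  is_lub (fun y => exists v : vec, vnorm M v = 1 /\ y = vnorm M (mapply M A v)) r.

(** generators of S_s: index 0: I, 1: a + a^dag, 2: i(a - a^dag),
    3 + i (0 <= i <= s-2): (a^dag a)^(i+1). *)
Definition gen (M : nat) (l : nat) : mat :=
  match l with
  | O => mid
  | 1%nat => madd ann adag
  | 2%nat => mscale Ci (msub ann adag)
  | S (S (S i)) => mpow M (numop M) (S i)
  end.
(** S is in the real span of I, a+a^dag, i(a-a^dag), (a^dag a)^i (1 <= i <= s-1)
    (for s >= 2 the generators are indices 0 .. s+1). *)
Definition in_S (M s : nat) (S : mat) : Prop :=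
  exists c : nat -> R,
    mat_eq M S (fun i j => Csum (fun l => Cmul (RtoC (c l)) (gen M l i j)) (s + 1)).

Definition is_min_dist (M s : nat) (r : R) : Prop :=
  (exists S, in_S M s S /\ opnorm M (msub (mpow M (numop M) s) S) r) /\
  (forall S r', in_S M s S -> opnorm M (msub (mpow M (numop M) s) S) r' -> r <= r').

(** n_k = floor (M sin^2 (k pi / (2 s))) ; Int_part is the floor function *)
Definition nk (s M k : nat) : nat :=
  Z.to_nat (Int_part (INR M * (sin (INR k * PI / (2 * INR s))) ^ 2)).

Definition lin_sys (s M : nat) (x : nat -> R) : Prop :=
  (forall i : nat, (1 <= i <= s - 1)%nat ->
     sum_f_R0 (fun k => (-1) ^ k * x k * INR (nk s M k) ^ i) s = 0) /\
  sum_f_R0 (fun k => (-1) ^ k * x k) s = 0 /\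
  sum_f_R0 (fun k => x k) s = 2.

Definition ket0 (s M : nat) (x : nat -> R) : vec :=
  fun m => Csum (fun k => if Nat.even k then Cmul (RtoC (sqrt (x k))) (fock (nk s M k) m)
                          else RtoC 0) s.
Definition ket1 (s M : nat) (x : nat -> R) : vec :=
  fun m => Csum (fun k => if Nat.odd k then Cmul (RtoC (sqrt (x k))) (fock (nk s M k) m)
                          else RtoC 0) s.
Definition projP (s M : nat) (x : nat -> R) : mat :=
  madd (outer (ket0 s M x) (ket0 s M x)) (outer (ket1 s M x) (ket1 s M x)).

Definition sig_diff (s M : nat) (x : nat -> R) : R :=
  expval M (mpow M (numop M) s) (ket0 s M x) - expval M (mpow M (numop M) s) (ket1 s M x).

Definition x_lim (s k : nat) : R :=
  2 / INR s - (if Nat.eqb k 0 then 1 / INR s else 0)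
            - (if Nat.eqb k s then 1 / INR s else 0).

(* Main.v *)
Require Import Defs.
From Stdlib Require Import Reals Lra Lia ZArith Bool Arith.
From Stdlib Require Import Classical FunctionalExtensionality IndefiniteDescription.
Open Scope R_scope.

Lemma sum_ext (f g : nat -> R) n :
  (forall k, (k <= n)%nat -> f k = g k) -> sum_f_R0 f n = sum_f_R0 g n.
Proof. apply sum_eq. Qed.

Lemma sum_add (f g : nat -> R) n :
  sum_f_R0 (fun k => f k + g k) n = sum_f_R0 f n + sum_f_R0 g n.
Proof. induction n; simpl; [ring|rewrite IHn; ring]. Qed.

Lemma sum_scal (c : R) (f : nat -> R) n :
  sum_f_R0 (fun k => c * f k) n = c * sum_f_R0 f n.
Proof. induction n; simpl; [ring|rewrite IHn; ring]. Qed.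

Lemma sum_opp (f : nat -> R) n :
  sum_f_R0 (fun k => - f k) n = - sum_f_R0 f n.
Proof. induction n; simpl; [ring|rewrite IHn; ring]. Qed.

Lemma sum_zero n : sum_f_R0 (fun _ => 0) n = 0.
Proof. induction n; simpl; [ring|rewrite IHn; ring]. Qed.

Lemma sum_zero' (f : nat -> R) n : (forall k, (k <= n)%nat -> f k = 0) -> sum_f_R0 f n = 0.
Proof. intros H. rewrite (sum_ext f (fun _ => 0)); auto. apply sum_zero. Qed.

Lemma sum_swap (a : nat -> nat -> R) n m :
  sum_f_R0 (fun i => sum_f_R0 (fun j => a i j) m) n =
  sum_f_R0 (fun j => sum_f_R0 (fun i => a i j) n) m.
Proof.
  induction n; simpl.
  - reflexivity.
  - rewrite IHn. rewrite <- sum_add. reflexivity.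
Qed.

Lemma sum_delta (c : nat -> R) a n : (a <= n)%nat ->
  sum_f_R0 (fun k => if Nat.eqb k a then c k else 0) n = c a.
Proof.
  induction n; intros H; cbn -[Nat.eqb].
  - assert (a = 0%nat) by lia; subst; reflexivity.
  - destruct (Nat.eq_dec a (S n)) as [->|Hne].
    + rewrite Nat.eqb_refl. rewrite (sum_zero' _ n); [ring|].
      intros k Hk. destruct (Nat.eqb_spec k (S n)); [lia|reflexivity].
    + destruct (Nat.eqb_spec (S n) a); [lia|]. rewrite IHn by lia. ring.
Qed.

Lemma sum_delta_out (c : nat -> R) a n : (n < a)%nat ->
  sum_f_R0 (fun k => if Nat.eqb k a then c k else 0) n = 0.
Proof.
  intros H; apply sum_zero'; intros k Hk; destruct (Nat.eqb_spec k a); [lia|auto].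
Qed.

Lemma sum_le (f g : nat -> R) n : (forall k, (k <= n)%nat -> f k <= g k) ->
  sum_f_R0 f n <= sum_f_R0 g n.
Proof.
  induction n; intros H; simpl; [apply H; lia|].
  apply Rplus_le_compat; [apply IHn; intros; apply H; lia | apply H; lia].
Qed.

Lemma sum_nonneg (f : nat -> R) n : (forall k, (k <= n)%nat -> 0 <= f k) ->
  0 <= sum_f_R0 f n.
Proof. intros H. rewrite <- (sum_zero n). apply sum_le. auto. Qed.

Lemma sum_pos (f : nat -> R) n : (forall k, (k <= n)%nat -> 0 < f k) ->
  0 < sum_f_R0 f n.
Proof.
  induction n; intros H; simpl; [apply H; lia|].
  apply Rplus_lt_0_compat; [apply IHn; intros; apply H; lia | apply H; lia].
Qed.

Lemma sum_term_le (f : nat -> R) n k : (forall j, (j <= n)%nat -> 0 <= f j) ->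
  (k <= n)%nat -> f k <= sum_f_R0 f n.
Proof.
  induction n; intros H Hk; simpl.
  - assert (k = 0%nat) by lia; subst; lra.
  - destruct (Nat.eq_dec k (S n)) as [->|Hne].
    + assert (0 <= sum_f_R0 f n) by (apply sum_nonneg; intros; apply H; lia). lra.
    + assert (f k <= sum_f_R0 f n) by (apply IHn; [intros; apply H; lia|lia]).
      assert (0 <= f (S n)) by (apply H; lia). lra.
Qed.

Lemma cplx_eq (z w : cplx) : fst z = fst w -> snd z = snd w -> z = w.
Proof. destruct z, w; simpl; intros; subst; reflexivity. Qed.

Ltac ceq := apply cplx_eq; simpl; ring.

Lemma Csum_RtoC (f : nat -> R) n :
  Csum (fun k => RtoC (f k)) n = RtoC (sum_f_R0 f n).
Proof. unfold Csum, RtoC; simpl. f_equal. apply sum_zero. Qed.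

Lemma Csum_ext (f g : nat -> cplx) n :
  (forall k, (k <= n)%nat -> f k = g k) -> Csum f n = Csum g n.
Proof.
  intros H; unfold Csum; f_equal; apply sum_ext; intros k Hk; rewrite H; auto.
Qed.

Definition delta (a b : nat) : R := if Nat.eqb a b then 1 else 0.

Lemma fock_RtoC n m : fock n m = RtoC (delta m n).
Proof. unfold fock, delta; destruct (Nat.eqb m n); reflexivity. Qed.

Definition diagm (d : nat -> R) : mat :=
  fun a b => if Nat.eqb a b then RtoC (d a) else RtoC 0.

Lemma ann_eq k a : ann k a = RtoC (if Nat.eqb (S k) a then sqrt (INR a) else 0).
Proof. unfold ann; destruct (Nat.eqb (S k) a); reflexivity. Qed.

Lemma numop_entry M a b : (a <= M)%nat ->
  numop M a b = diagm INR a b.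
Proof.
  intros Ha. unfold numop, mmul, adag.
  rewrite (Csum_ext _ (fun k => RtoC (if Nat.eqb k (pred a) then
       (if Nat.eqb a 0 then 0 else if Nat.eqb a b then INR a else 0) else 0))).
  - rewrite Csum_RtoC. unfold diagm.
    rewrite sum_delta by lia.
    destruct (Nat.eqb_spec a 0); destruct (Nat.eqb_spec a b); subst; simpl; auto.
  - intros k Hk. rewrite !ann_eq.
    destruct (Nat.eqb_spec (S k) a); destruct (Nat.eqb_spec (S k) b);
    destruct (Nat.eqb_spec k (pred a)); destruct (Nat.eqb_spec a 0);
    destruct (Nat.eqb_spec a b); subst; try lia; unfold Cconj, Cmul, RtoC;
    apply cplx_eq; cbn [fst snd]; try ring.
    rewrite sqrt_sqrt; [ring|apply pos_INR].
Qed.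

Lemma mpow_numop M i a b : (a <= M)%nat -> (b <= M)%nat ->
  mpow M (numop M) i a b = diagm (fun m => INR m ^ i) a b.
Proof.
  revert a b; induction i; intros a b Ha Hb; simpl.
  - unfold mid, diagm. destruct (Nat.eqb a b); reflexivity.
  - unfold mmul.
    rewrite (Csum_ext _ (fun k => RtoC (if Nat.eqb k a then
         INR a * (if Nat.eqb a b then INR a ^ i else 0) else 0))).
    + rewrite Csum_RtoC, sum_delta by lia. unfold diagm.
      destruct (Nat.eqb a b); f_equal; ring.
    + intros k Hk. rewrite numop_entry by lia. rewrite IHi by lia. unfold diagm.
      destruct (Nat.eqb_spec a k); destruct (Nat.eqb_spec k a); destruct (Nat.eqb_spec k b);
      destruct (Nat.eqb_spec a b); subst; try lia; apply cplx_eq; simpl; ring.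
Qed.

Lemma mapply_diag M A d v a : (a <= M)%nat ->
  (forall i j, (i <= M)%nat -> (j <= M)%nat -> A i j = diagm d i j) ->
  mapply M A v a = Cmul (RtoC (d a)) (v a).
Proof.
  intros Ha HA. unfold mapply, Csum.
  apply cplx_eq; simpl.
  - rewrite (sum_ext _ (fun k => if Nat.eqb k a then d a * fst (v a) else 0)).
    + rewrite sum_delta by lia. ring.
    + intros k Hk; rewrite HA by lia; unfold diagm, RtoC;
      destruct (Nat.eqb_spec a k); destruct (Nat.eqb_spec k a); subst; try lia; simpl; ring.
  - rewrite (sum_ext _ (fun k => if Nat.eqb k a then d a * snd (v a) else 0)).
    + rewrite sum_delta by lia. ring.
    + intros k Hk; rewrite HA by lia; unfold diagm, RtoC;
      destruct (Nat.eqb_spec a k); destruct (Nat.eqb_spec k a); subst; try lia; simpl; ring.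
Qed.

Definition pexc (t : nat -> R) (n k : nat) : R :=
  prod_f_R0 (fun j => if Nat.eqb j k then 1 else t k - t j) n.
Definition wdd (t : nat -> R) (n k : nat) : R := / pexc t n k.
Definition Fdd (t : nat -> R) (n i : nat) : R :=
  sum_f_R0 (fun k => wdd t n k * t k ^ i) n.
Definition inj_on (t : nat -> R) (n : nat) : Prop :=
  forall j k, (j <= n)%nat -> (k <= n)%nat -> j <> k -> t j <> t k.
Definition shift (t : nat -> R) : nat -> R := fun j => t (S j).

Lemma prod_first (f : nat -> R) n :
  prod_f_R0 f (S n) = f 0%nat * prod_f_R0 (fun j => f (S j)) n.
Proof. induction n; simpl in *; [ring|]. rewrite IHn. ring. Qed.

Lemma prod_ext (f g : nat -> R) n :
  (forall k, (k <= n)%nat -> f k = g k) -> prod_f_R0 f n = prod_f_R0 g n.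
Proof.
  induction n; intros H; simpl; [apply H; lia|].
  rewrite IHn by (intros; apply H; lia). rewrite H by lia. reflexivity.
Qed.

Lemma prod_nz (f : nat -> R) n :
  (forall k, (k <= n)%nat -> f k <> 0) -> prod_f_R0 f n <> 0.
Proof.
  induction n; intros H; simpl; [apply H; lia|].
  apply Rmult_integral_contrapositive_currified; [apply IHn; intros; apply H; lia|apply H; lia].
Qed.

Lemma sum_first (f : nat -> R) n :
  sum_f_R0 f (S n) = f 0%nat + sum_f_R0 (fun j => f (S j)) n.
Proof. induction n; simpl in *; [ring|]. rewrite IHn. ring. Qed.

Lemma pexc_nz t n k : inj_on t n -> (k <= n)%nat -> pexc t n k <> 0.
Proof.
  intros Hi Hk. unfold pexc. apply prod_nz. intros j Hj.
  destruct (Nat.eqb_spec j k); [lra|]. intro E. apply (Hi k j); auto. lra.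
Qed.

Lemma pexc_last t n k : (k <= n)%nat ->
  pexc t (S n) k = pexc t n k * (t k - t (S n)).
Proof.
  intros Hk. unfold pexc. cbn -[Nat.eqb]. destruct (Nat.eqb_spec (S n) k); [lia|]. reflexivity.
Qed.

Lemma pexc_first t n k : (k <= n)%nat ->
  pexc t (S n) (S k) = (t (S k) - t 0%nat) * pexc (shift t) n k.
Proof.
  intros Hk. unfold pexc. rewrite prod_first. f_equal.
Qed.

Lemma inj_on_S t n : inj_on t (S n) -> inj_on t n.
Proof. intros H j k Hj Hk; apply H; lia. Qed.

Lemma inj_on_shift t n : inj_on t (S n) -> inj_on (shift t) n.
Proof. intros H j k Hj Hk Hne; unfold shift; apply H; lia. Qed.

Lemma Fdd_rec_last t n i : inj_on t (S n) ->
  Fdd t (S n) (S i) = Fdd t n i + t (S n) * Fdd t (S n) i.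
Proof.
  intros Hi. unfold Fdd.
  rewrite (sum_ext (fun k => wdd t (S n) k * t k ^ S i)
    (fun k => (if Nat.eqb k (S n) then 0 else wdd t (S n) k * (t k - t (S n)) * t k ^ i)
              + t (S n) * (wdd t (S n) k * t k ^ i))).
  2:{ intros k Hk. destruct (Nat.eqb_spec k (S n)); [subst; simpl; ring|]. simpl; ring. }
  rewrite sum_add, sum_scal. f_equal. simpl. rewrite Nat.eqb_refl.
  rewrite Rplus_0_r. apply sum_ext. intros k Hk.
  destruct (Nat.eqb_spec k (S n)); [lia|].
  unfold wdd. rewrite pexc_last by lia.
  assert (pexc t n k <> 0) by (apply pexc_nz; [apply inj_on_S; auto|lia]).
  assert (t k - t (S n) <> 0) by (intro E; apply (Hi k (S n)); try lia; lra).
  field. auto.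
Qed.

Lemma Fdd_rec_first t n i : inj_on t (S n) ->
  Fdd t (S n) (S i) = Fdd (shift t) n i + t 0%nat * Fdd t (S n) i.
Proof.
  intros Hi. unfold Fdd.
  rewrite (sum_ext (fun k => wdd t (S n) k * t k ^ S i)
    (fun k => (if Nat.eqb k 0 then 0 else wdd t (S n) k * (t k - t 0%nat) * t k ^ i)
              + t 0%nat * (wdd t (S n) k * t k ^ i))).
  2:{ intros k Hk. destruct (Nat.eqb_spec k 0); [subst; simpl; ring|]. simpl; ring. }
  rewrite sum_add, sum_scal. f_equal. rewrite sum_first. simpl (Nat.eqb 0 0).
  rewrite Rplus_0_l. apply sum_ext. intros k Hk. simpl (Nat.eqb (S k) 0).
  unfold wdd. rewrite pexc_first by lia. unfold shift.
  assert (pexc (shift t) n k <> 0) by (apply pexc_nz; [apply inj_on_shift; auto|lia]).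
  assert (t (S k) - t 0%nat <> 0) by (intro E; apply (Hi (S k) 0%nat); try lia; lra).
  unfold shift in *. field. auto.
Qed.

Theorem Fdd_val : forall n t, inj_on t n -> forall i, (i <= n)%nat ->
  Fdd t n i = if Nat.eqb i n then 1 else 0.
Proof.
  induction n; intros t Hi i Hin.
  - assert (i = 0%nat) by lia; subst. unfold Fdd, wdd, pexc. simpl. field.
  - assert (Hlow : forall i, (i <= n)%nat -> Fdd t (S n) i = 0).
    { intros j Hj.
      assert (E1 := Fdd_rec_last t n j Hi). assert (E2 := Fdd_rec_first t n j Hi).
      rewrite IHn in E1 by (auto; apply inj_on_S; auto).
      rewrite IHn in E2 by (auto; apply inj_on_shift; auto).
      assert (t (S n) - t 0%nat <> 0) by (intro E; apply (Hi (S n) 0%nat); try lia; lra).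
      assert ((t (S n) - t 0%nat) * Fdd t (S n) j = 0) by lra.
      apply Rmult_integral in H0. destruct H0; [contradiction|auto]. }
    destruct (Nat.eqb_spec i (S n)).
    + subst. rewrite Fdd_rec_last by auto. rewrite IHn by (auto; apply inj_on_S; auto).
      rewrite Nat.eqb_refl, Hlow by lia. ring.
    + apply Hlow; lia.
Qed.

Theorem dd_unique : forall n t (y : nat -> R), inj_on t n ->
  (forall i, (i < n)%nat -> sum_f_R0 (fun k => y k * t k ^ i) n = 0) ->
  forall k, (k <= n)%nat -> y k = wdd t n k * sum_f_R0 (fun j => y j * t j ^ n) n.
Proof.
  induction n; intros t y Hi Hy k Hk.
  - assert (k = 0%nat) by lia; subst. unfold wdd, pexc; simpl. field.
  - set (C := sum_f_R0 (fun j => y j * t j ^ S n) (S n)).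
    set (y' := fun k => y k * (t k - t (S n))).
    assert (Hy' : forall i, (i < n)%nat -> sum_f_R0 (fun k => y' k * t k ^ i) n = 0).
    { intros i Hin.
      assert (E: sum_f_R0 (fun k => y k * t k ^ S i) (S n) - t (S n) * sum_f_R0 (fun k => y k * t k ^ i) (S n)
               = sum_f_R0 (fun k => y' k * t k ^ i) n).
      { rewrite <- sum_scal. unfold Rminus. rewrite <- sum_opp, <- sum_add. simpl.
        unfold y'. replace (y (S n) * (t (S n) * t (S n) ^ i) + - (t (S n) * (y (S n) * t (S n) ^ i))) with 0 by ring.
        rewrite Rplus_0_r. apply sum_ext; intros; simpl; ring. }
      rewrite <- E, !Hy by lia. ring. }
    assert (HC : sum_f_R0 (fun j => y' j * t j ^ n) n = C).
    { assert (E: C - t (S n) * sum_f_R0 (fun k => y k * t k ^ n) (S n)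
               = sum_f_R0 (fun k => y' k * t k ^ n) n).
      { unfold C. rewrite <- sum_scal. unfold Rminus. rewrite <- sum_opp, <- sum_add. simpl.
        unfold y'. replace (y (S n) * (t (S n) * t (S n) ^ n) + - (t (S n) * (y (S n) * t (S n) ^ n))) with 0 by ring.
        rewrite Rplus_0_r. apply sum_ext; intros; simpl; ring. }
      rewrite <- E, Hy by lia. ring. }
    assert (IH := IHn t y' (inj_on_S _ _ Hi) Hy'). rewrite HC in IH.
    assert (Hlow : forall k, (k <= n)%nat -> y k = wdd t (S n) k * C).
    { intros j Hj. specialize (IH j Hj). unfold y' in IH. unfold wdd in *.
      rewrite pexc_last by auto.
      assert (pexc t n j <> 0) by (apply pexc_nz; [apply inj_on_S; auto|lia]).
      assert (t j - t (S n) <> 0) by (intro E; apply (Hi j (S n)); try lia; lra).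
      apply (Rmult_eq_reg_r (t j - t (S n))); auto. rewrite IH. field. auto. }
    destruct (Nat.eq_dec k (S n)) as [->|]; [|apply Hlow; lia].
    assert (H0 := Hy 0%nat ltac:(lia)).
    change (sum_f_R0 (fun k => y k * t k ^ 0) n + y (S n) * t (S n) ^ 0 = 0) in H0.
    assert (HF := Fdd_val (S n) t Hi 0%nat ltac:(lia)). simpl (Nat.eqb 0 (S n)) in HF.
    unfold Fdd in HF.
    change (sum_f_R0 (fun k => wdd t (S n) k * t k ^ 0) n + wdd t (S n) (S n) * t (S n) ^ 0 = 0) in HF.
    rewrite (sum_ext (fun k => y k * t k ^ 0) (fun k => C * wdd t (S n) k)) in H0
      by (intros; rewrite Hlow by lia; simpl; ring).
    rewrite sum_scal in H0.
    rewrite (sum_ext (fun k => wdd t (S n) k * t k ^ 0) (wdd t (S n))) in HF by (intros; simpl; ring).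
    fold C. simpl in H0, HF. nra.
Qed.

Definition incr_on (t : nat -> R) (s : nat) : Prop :=
  forall j k, (j < k)%nat -> (k <= s)%nat -> t j < t k.

Lemma incr_inj t s : incr_on t s -> inj_on t s.
Proof.
  intros H j k Hj Hk Hne. assert (h0 : (j < k \/ k < j)%nat) by lia; destruct h0 as [h|h].
  - specialize (H j k h Hk); lra.
  - specialize (H k j h Hj); lra.
Qed.

Lemma neg1_pow_sq n : (-1) ^ n * (-1) ^ n = 1.
Proof. rewrite <- pow_add. replace (n + n)%nat with (2 * n)%nat by lia. apply pow_1_even. Qed.

Lemma neg1_pow_nz n : (-1) ^ n <> 0.
Proof. apply pow_nonzero; lra. Qed.

Lemma prod_sign t s k : incr_on t s -> (k <= s)%nat -> forall N, (N <= s)%nat ->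
  0 < (if Nat.leb k N then (-1) ^ (N - k) else 1) *
      prod_f_R0 (fun j => if Nat.eqb j k then 1 else t k - t j) N.
Proof.
  intros Ht Hk. induction N; intros HN.
  - simpl. destruct (Nat.eqb_spec 0 k).
    + subst. simpl. lra.
    + destruct k; [lia|]. simpl. assert (t 0%nat < t (S k)) by (apply Ht; lia). lra.
  - cbn [prod_f_R0]. specialize (IHN ltac:(lia)).
    destruct (Nat.eqb_spec (S N) k).
    + subst. rewrite Nat.leb_refl, Nat.sub_diag. destruct (Nat.leb_spec (S N) N); [lia|].
      simpl in *. lra.
    + destruct (Nat.leb_spec k (S N)); destruct (Nat.leb_spec k N); try lia.
      * replace (S N - k)%nat with (S (N - k)) by lia. simpl.
        assert (t k < t (S N)) by (apply Ht; lia).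
        replace (-1 * (-1) ^ (N - k) * (prod_f_R0 (fun j => if Nat.eqb j k then 1 else t k - t j) N * (t k - t (S N))))
          with (((-1) ^ (N - k) * prod_f_R0 (fun j => if Nat.eqb j k then 1 else t k - t j) N) * (t (S N) - t k)) by ring.
        apply Rmult_lt_0_compat; lra.
      * assert (t (S N) < t k) by (apply Ht; lia).
        rewrite Rmult_1_l in *. apply Rmult_lt_0_compat; lra.
Qed.

Definition aw (t : nat -> R) (s k : nat) : R := (-1) ^ s * (-1) ^ k * wdd t s k.

Lemma aw_pos t s k : incr_on t s -> (k <= s)%nat -> 0 < aw t s k.
Proof.
  intros Ht Hk. assert (H := prod_sign t s k Ht Hk s (le_n _)).
  rewrite (proj2 (Nat.leb_le k s) Hk) in H. fold (pexc t s k) in H.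
  unfold aw, wdd.
  assert (E : (-1) ^ s * (-1) ^ k = (-1) ^ (s - k)).
  { replace s with ((s - k) + k)%nat at 1 by lia. rewrite pow_add.
    rewrite Rmult_assoc, neg1_pow_sq. ring. }
  rewrite E.
  assert (pexc t s k <> 0) by (intro Z; rewrite Z in H; lra).
  replace ((-1) ^ (s - k) * / pexc t s k) with (/ ((-1) ^ (s - k) * pexc t s k)).
  - apply Rinv_0_lt_compat; auto.
  - rewrite <- (Rmult_1_l (/ ((-1) ^ (s - k) * pexc t s k))), <- (neg1_pow_sq (s - k)).
    field. split; auto. apply neg1_pow_nz.
Qed.

Definition lsys (s : nat) (t : nat -> R) (x : nat -> R) : Prop :=
  (forall i : nat, (1 <= i <= s - 1)%nat ->
     sum_f_R0 (fun k => (-1) ^ k * x k * t k ^ i) s = 0) /\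
  sum_f_R0 (fun k => (-1) ^ k * x k) s = 0 /\
  sum_f_R0 (fun k => x k) s = 2.

Definition Aw t s := sum_f_R0 (aw t s) s.
Definition solx (t : nat -> R) (s k : nat) : R := 2 * aw t s k / Aw t s.

Lemma Aw_pos t s : incr_on t s -> 0 < Aw t s.
Proof. intros; apply sum_pos; intros; apply aw_pos; auto. Qed.

Lemma solx_pos t s k : incr_on t s -> (k <= s)%nat -> 0 < solx t s k.
Proof.
  intros. unfold solx. assert (0 < aw t s k) by (apply aw_pos; auto).
  assert (0 < Aw t s) by (apply Aw_pos; auto).
  apply Rdiv_lt_0_compat; lra.
Qed.

Lemma y_of_solx t s k : (-1) ^ k * solx t s k = 2 * (-1) ^ s / Aw t s * wdd t s k.
Proof.
  unfold solx, aw. unfold Rdiv.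
  replace ((-1) ^ k * (2 * ((-1) ^ s * (-1) ^ k * wdd t s k) * / Aw t s))
    with (((-1) ^ k * (-1) ^ k) * (2 * (-1) ^ s * / Aw t s * wdd t s k)) by ring.
  rewrite neg1_pow_sq. ring.
Qed.

Lemma solx_lsys t s : (1 <= s)%nat -> incr_on t s -> lsys s t (solx t s).
Proof.
  intros Hs Ht. assert (HA := Aw_pos t s Ht).
  assert (HF : forall i, (i < s)%nat ->
     sum_f_R0 (fun k => (-1) ^ k * solx t s k * t k ^ i) s = 0).
  { intros i Hi.
    rewrite (sum_ext _ (fun k => (2 * (-1) ^ s / Aw t s) * (wdd t s k * t k ^ i)))
      by (intros; rewrite y_of_solx; ring).
    rewrite sum_scal. fold (Fdd t s i). rewrite Fdd_val by (auto using incr_inj; lia).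
    destruct (Nat.eqb_spec i s); [lia|ring]. }
  split; [|split].
  - intros i Hi. apply HF. lia.
  - rewrite <- (HF 0%nat) by lia. apply sum_ext; intros; simpl; ring.
  - unfold solx. unfold Rdiv.
    rewrite (sum_ext _ (fun k => (2 * / Aw t s) * aw t s k)) by (intros; ring).
    rewrite sum_scal. fold (Aw t s). field. lra.
Qed.

Lemma lsys_unique t s x : (1 <= s)%nat -> incr_on t s -> lsys s t x ->
  (forall k, (k <= s)%nat -> x k = solx t s k) /\
  sum_f_R0 (fun k => (-1) ^ k * x k * t k ^ s) s = 2 * (-1) ^ s / Aw t s.
Proof.
  intros Hs Ht [H1 [H2 H3]].
  set (C := sum_f_R0 (fun j => (-1) ^ j * x j * t j ^ s) s).
  assert (Hy : forall k, (k <= s)%nat -> (-1) ^ k * x k = wdd t s k * C).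
  { intros k Hk. apply (dd_unique s t (fun k => (-1) ^ k * x k)); auto using incr_inj.
    intros i Hi. destruct i.
    - rewrite <- H2. apply sum_ext; intros; simpl; ring.
    - apply H1. lia. }
  assert (Hx : forall k, (k <= s)%nat -> x k = (-1) ^ s * C * aw t s k).
  { intros k Hk. unfold aw.
    replace ((-1) ^ s * C * ((-1) ^ s * (-1) ^ k * wdd t s k))
      with (((-1) ^ s * (-1) ^ s) * ((-1) ^ k * (wdd t s k * C))) by ring.
    rewrite neg1_pow_sq, <- Hy by auto.
    replace (1 * ((-1) ^ k * ((-1) ^ k * x k))) with (((-1) ^ k * (-1) ^ k) * x k) by ring.
    rewrite neg1_pow_sq. ring. }
  assert (HA := Aw_pos t s Ht).
  assert (HC : (-1) ^ s * C * Aw t s = 2).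
  { rewrite <- H3. unfold Aw. rewrite <- sum_scal. apply sum_ext. intros; rewrite Hx; auto. }
  assert (HC' : C = 2 * (-1) ^ s / Aw t s).
  { apply (Rmult_eq_reg_l ((-1) ^ s)); [|apply neg1_pow_nz].
    replace ((-1) ^ s * (2 * (-1) ^ s / Aw t s)) with (2 * ((-1) ^ s * (-1) ^ s) / Aw t s) by (unfold Rdiv; ring).
    rewrite neg1_pow_sq. apply (Rmult_eq_reg_r (Aw t s)); [|lra].
    rewrite HC. field. lra. }
  split.
  - intros k Hk. rewrite Hx by auto. unfold solx. rewrite HC'.
    replace ((-1) ^ s * (2 * (-1) ^ s / Aw t s) * aw t s k)
      with (((-1) ^ s * (-1) ^ s) * (2 * aw t s k / Aw t s)) by (field; lra).
    rewrite neg1_pow_sq. ring.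
  - exact HC'.
Qed.

Definition Pol (d : nat) (f : R -> R) : Prop :=
  exists c : nat -> R, forall x, f x = sum_f_R0 (fun i => c i * x ^ i) d.

Lemma Pol_ext d f g : (forall x, f x = g x) -> Pol d f -> Pol d g.
Proof. intros E [c Hc]. exists c. intros x. rewrite <- E. auto. Qed.

Lemma Pol_mono d d' f : (d <= d')%nat -> Pol d f -> Pol d' f.
Proof.
  intros Hd [c Hc]. exists (fun i => if Nat.leb i d then c i else 0). intros x.
  rewrite Hc. induction Hd.
  - apply sum_ext. intros k Hk. rewrite (proj2 (Nat.leb_le k d) Hk). auto.
  - cbn -[Nat.leb]. rewrite IHHd. destruct (Nat.leb_spec (S m) d); [lia|]. ring.
Qed.

Lemma Pol_add d f g : Pol d f -> Pol d g -> Pol d (fun x => f x + g x).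
Proof.
  intros [c Hc] [e He]. exists (fun i => c i + e i). intros x.
  rewrite Hc, He, <- sum_add. apply sum_ext; intros; ring.
Qed.

Lemma Pol_scal d a f : Pol d f -> Pol d (fun x => a * f x).
Proof.
  intros [c Hc]. exists (fun i => a * c i). intros x.
  rewrite Hc, <- sum_scal. apply sum_ext; intros; ring.
Qed.

Lemma Pol_const d a : Pol d (fun _ => a).
Proof.
  apply (Pol_mono 0); [lia|]. exists (fun _ => a). intros x. simpl. ring.
Qed.

Lemma Pol_mulx d f : Pol d f -> Pol (S d) (fun x => x * f x).
Proof.
  intros [c Hc]. exists (fun i => match i with O => 0 | S j => c j end). intros x.
  rewrite sum_first, Hc. simpl. rewrite Rmult_0_l, Rplus_0_l, <- sum_scal.
  apply sum_ext; intros; ring.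
Qed.

Lemma Pol_pow n : Pol n (fun x => x ^ n).
Proof.
  induction n.
  - apply (Pol_ext 0 (fun _ => 1)); [intros; simpl; auto|apply Pol_const].
  - apply (Pol_ext (S n) (fun x => x * x ^ n)); [intros; simpl; auto|]. apply Pol_mulx; auto.
Qed.

Lemma Pol_opp d f : Pol d f -> Pol d (fun x => - f x).
Proof. intros H. apply (Pol_ext d (fun x => -1 * f x)); [intros; ring|apply Pol_scal; auto]. Qed.

Lemma Pol_sub d f g : Pol d f -> Pol d g -> Pol d (fun x => f x - g x).
Proof. intros; apply Pol_add; auto; apply Pol_opp; auto. Qed.

Lemma Pol_sum d (g : nat -> R -> R) N : (forall k, (k <= N)%nat -> Pol d (g k)) ->
  Pol d (fun x => sum_f_R0 (fun k => g k x) N).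
Proof.
  induction N; intros H; simpl; [apply H; lia|].
  apply Pol_add; [apply IHN; intros; apply H; lia|apply H; lia].
Qed.

Lemma Pol_mul_lin d f a : Pol d f -> Pol (S d) (fun x => f x * (x - a)).
Proof.
  intros H. apply (Pol_ext (S d) (fun x => x * f x + (- a) * f x)); [intros; ring|].
  apply Pol_add; [apply Pol_mulx; auto|apply Pol_mono with d; [lia|apply Pol_scal; auto]].
Qed.

Lemma Pol_mul_aff d f al be : Pol d f -> Pol (S d) (fun x => f x * (al * x + be)).
Proof.
  intros H. apply (Pol_ext (S d) (fun x => al * (x * f x) + be * f x)); [intros; ring|].
  apply Pol_add; [apply Pol_scal, Pol_mulx; auto|apply Pol_mono with d; [lia|apply Pol_scal; auto]].
Qed.

Lemma Pol_aff_pow n al be : Pol n (fun x => (al * x + be) ^ n).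
Proof.
  induction n.
  - apply (Pol_ext 0 (fun _ => 1)); [intros; simpl; auto|apply Pol_const].
  - apply (Pol_ext (S n) (fun x => (al * x + be) ^ n * (al * x + be))); [intros; simpl; ring|].
    apply Pol_mul_aff; auto.
Qed.

Lemma Pol_comp_aff d f al be : Pol d f -> Pol d (fun x => f (al * x + be)).
Proof.
  intros [c Hc]. apply (Pol_ext d (fun x => sum_f_R0 (fun i => c i * (al * x + be) ^ i) d)).
  - intros; rewrite Hc; auto.
  - apply Pol_sum. intros k Hk. apply Pol_scal. apply Pol_mono with k; auto. apply Pol_aff_pow.
Qed.

Definition Lead (d : nat) (ka : R) (f : R -> R) : Prop :=
  Pol d (fun x => f x - ka * x ^ S d).

Lemma Lead_aff_pow d al be : Lead d (al ^ S d) (fun x => (al * x + be) ^ S d).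
Proof.
  induction d.
  - unfold Lead. apply (Pol_ext 0 (fun _ => be)); [intros; simpl; ring|apply Pol_const].
  - unfold Lead in *.
    apply (Pol_ext (S d) (fun x => ((al * x + be) ^ S d - al ^ S d * x ^ S d) * (al * x + be)
                                  + (al ^ S d * be) * x ^ S d)).
    + intros x. simpl. ring.
    + apply Pol_add; [apply Pol_mul_aff; auto|].
      apply Pol_scal. apply Pol_mono with (S d); [lia|]. apply Pol_pow.
Qed.

Lemma annih (y t : nat -> R) (n d : nat) (q : R -> R) :
  (forall i, (i <= d)%nat -> sum_f_R0 (fun k => y k * t k ^ i) n = 0) ->
  Pol d q -> sum_f_R0 (fun k => y k * q (t k)) n = 0.
Proof.
  intros H [c Hc].
  rewrite (sum_ext _ (fun k => sum_f_R0 (fun i => c i * (y k * t k ^ i)) d)).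
  - rewrite sum_swap. apply sum_zero'. intros i Hi.
    rewrite sum_scal, H by auto. ring.
  - intros k Hk. rewrite Hc, <- sum_scal. apply sum_ext; intros; ring.
Qed.

Lemma annih_lead (y t : nat -> R) (n d : nat) (q : R -> R) ka :
  (forall i, (i <= d)%nat -> sum_f_R0 (fun k => y k * t k ^ i) n = 0) ->
  Lead d ka q ->
  sum_f_R0 (fun k => y k * q (t k)) n = ka * sum_f_R0 (fun k => y k * t k ^ S d) n.
Proof.
  intros H HL. assert (E := annih y t n d _ H HL). cbv beta in E.
  rewrite <- sum_scal.
  apply Rminus_diag_uniq. rewrite <- E. unfold Rminus. rewrite <- sum_opp, <- sum_add.
  apply sum_ext; intros; ring.
Qed.

Fixpoint Tch (n : nat) (x : R) : R :=
  match n with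
  | O => 1
  | S m => match m with
           | O => x
           | S p => 2 * x * Tch m x - Tch p x
           end
  end.

Lemma Tch_SS n x : Tch (S (S n)) x = 2 * x * Tch (S n) x - Tch n x.
Proof. reflexivity. Qed.

Lemma Tch_cos n th : Tch n (cos th) = cos (INR n * th).
Proof.
  assert (H : forall n, Tch n (cos th) = cos (INR n * th) /\
                        Tch (S n) (cos th) = cos (INR (S n) * th)).
  { induction n0.
    - simpl. split; [rewrite Rmult_0_l, cos_0; auto|rewrite Rmult_1_l; auto].
    - destruct IHn0 as [H1 H2]. split; auto.
      rewrite Tch_SS, H2, H1.
      replace (INR (S (S n0)) * th) with (INR (S n0) * th + th) by (rewrite !S_INR; ring).
      replace (INR n0 * th) with (INR (S n0) * th - th) by (rewrite !S_INR; ring).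
      rewrite cos_plus, cos_minus. ring. }
  apply H.
Qed.

Lemma Tch_lead n : Lead n (2 ^ n) (Tch (S n)).
Proof.
  assert (H : forall n, Lead n (2 ^ n) (Tch (S n)) /\ Pol n (Tch n)).
  { induction n0.
    - split.
      + unfold Lead. apply (Pol_ext 0 (fun _ => 0)); [intros; simpl; ring|apply Pol_const].
      + apply (Pol_ext 0 (fun _ => 1)); [intros; simpl; auto|apply Pol_const].
    - destruct IHn0 as [H1 H2]. split.
      + unfold Lead in *.
        apply (Pol_ext (S n0) (fun x => 2 * (x * (Tch (S n0) x - 2 ^ n0 * x ^ S n0)) + (- Tch n0 x))).
        * intros x. rewrite Tch_SS. simpl. ring.
        * apply Pol_add; [apply Pol_scal, Pol_mulx; auto|].
          apply Pol_opp. apply Pol_mono with n0; auto.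
      + apply (Pol_ext (S n0) (fun x => (Tch (S n0) x - 2 ^ n0 * x ^ S n0) + 2 ^ n0 * x ^ S n0));
          [intros; ring|].
        apply Pol_add; [apply Pol_mono with n0; auto|apply Pol_scal, Pol_pow]. }
  apply H.
Qed.

Lemma Tch_Pol n : Pol n (Tch n).
Proof.
  destruct n; [apply (Pol_ext 0 (fun _ => 1)); [intros; simpl; auto|apply Pol_const]|].
  assert (H := Tch_lead n). unfold Lead in H.
  apply (Pol_ext (S n) (fun x => (Tch (S n) x - 2 ^ n * x ^ S n) + 2 ^ n * x ^ S n)); [intros; ring|].
  apply Pol_add; [apply Pol_mono with n; auto|apply Pol_scal, Pol_pow].
Qed.

Lemma Tch_bound n x : -1 <= x <= 1 -> Rabs (Tch n x) <= 1.
Proof.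
  intros Hx. rewrite <- (cos_acos x Hx), Tch_cos. apply Rabs_le. split; [apply COS_bound|apply COS_bound].
Qed.

Lemma cos_npi n : cos (INR n * PI) = (-1) ^ n.
Proof.
  induction n; [simpl; rewrite Rmult_0_l; apply cos_0|].
  rewrite S_INR, Rmult_plus_distr_r, Rmult_1_l, neg_cos, IHn. simpl; ring.
Qed.

Lemma sin_npi n : sin (INR n * PI) = 0.
Proof.
  induction n; [simpl; rewrite Rmult_0_l; apply sin_0|].
  rewrite S_INR, Rmult_plus_distr_r, Rmult_1_l, neg_sin, IHn. ring.
Qed.

Lemma cos_shift_npi x n : cos (x + INR n * PI) = (-1) ^ n * cos x.
Proof.
  induction n; [simpl; rewrite Rmult_0_l, Rplus_0_r; ring|].
  rewrite S_INR, Rmult_plus_distr_r, Rmult_1_l, <- Rplus_assoc, neg_cos, IHn. simpl; ring.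
Qed.

Lemma cos_sum_formula a n :
  2 * sin (a / 2) * sum_f_R0 (fun k => cos (INR k * a)) n =
  sin ((INR n + 1 / 2) * a) + sin (a / 2).
Proof.
  induction n.
  - simpl. rewrite Rmult_0_l, cos_0.
    replace ((0 + 1/2) * a) with (a / 2) by field. ring.
  - cbn [sum_f_R0]. rewrite Rmult_plus_distr_l, IHn.
    replace ((INR (S n) + 1 / 2) * a) with (INR (S n) * a + a / 2) by (rewrite S_INR; field).
    replace ((INR n + 1 / 2) * a) with (INR (S n) * a - a / 2) by (rewrite S_INR; field).
    rewrite sin_plus, sin_minus. ring.
Qed.

Section Nodes.
Variable s : nat.
Hypothesis hs : (2 <= s)%nat.

Definition cn (k : nat) : R := cos (INR k * PI / INR s).
Definition un (k : nat) : R := sin (INR k * PI / (2 * INR s)) ^ 2.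

Lemma INR_s_pos : 0 < INR s.
Proof. apply lt_0_INR; lia. Qed.

Lemma un_cn k : un k = - (1/2) * cn k + 1/2.
Proof.
  unfold un, cn. assert (H := INR_s_pos).
  replace (INR k * PI / INR s) with (2 * (INR k * PI / (2 * INR s))) by (field; lra).
  rewrite cos_2a_sin. field.
Qed.

Lemma un_incr : incr_on un s.
Proof.
  intros j k Hjk Hk. unfold un. assert (Hs := INR_s_pos).
  assert (HPI := PI_RGT_0).
  assert (Hj0 : 0 <= INR j) by apply pos_INR.
  assert (Hjk' : INR j < INR k) by (apply lt_INR; auto).
  assert (Hks : INR k <= INR s) by (apply le_INR; auto).
  assert (A1 : 0 <= INR j * PI / (2 * INR s)).
  { apply Rmult_le_pos; [apply Rmult_le_pos; lra|]. left; apply Rinv_0_lt_compat; lra. }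
  assert (A2 : INR k * PI / (2 * INR s) <= PI / 2).
  { apply (Rmult_le_reg_r (2 * INR s)); [lra|]. field_simplify; [|lra]. nra. }
  assert (A3 : INR j * PI / (2 * INR s) < INR k * PI / (2 * INR s)).
  { apply Rmult_lt_compat_r; [apply Rinv_0_lt_compat; lra|]. nra. }
  assert (S1 : sin (INR j * PI / (2 * INR s)) < sin (INR k * PI / (2 * INR s))).
  { apply sin_increasing_1; lra. }
  assert (S0 : 0 <= sin (INR j * PI / (2 * INR s))).
  { apply sin_ge_0; lra. }
  simpl. nra.
Qed.

Lemma un_range k : 0 <= un k <= 1.
Proof.
  unfold un. assert (H := SIN_bound (INR k * PI / (2 * INR s))). simpl. nra.
Qed.

Lemma un_s : un s = 1.
Proof.
  unfold un. assert (H := INR_s_pos).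
  replace (INR s * PI / (2 * INR s)) with (PI / 2) by (field; lra).
  rewrite sin_PI2. ring.
Qed.

Definition Omega (q : R -> R) : R :=
  sum_f_R0 (fun k => (-1) ^ k * x_lim s k * q (cn k)) s.

Lemma x_lim_sum : sum_f_R0 (x_lim s) s = 2.
Proof.
  unfold x_lim. assert (H := INR_s_pos).
  rewrite (sum_ext _ (fun k => 2 / INR s + (- (if Nat.eqb k 0 then 1 / INR s else 0))
                                      + (- (if Nat.eqb k s then 1 / INR s else 0)))) by (intros; ring).
  rewrite !sum_add, !sum_opp, sum_cte, sum_delta, sum_delta by lia.
  rewrite S_INR. field. lra.
Qed.

Lemma x_lim_pos k : (k <= s)%nat -> 0 < x_lim s k.
Proof.
  intros Hk. unfold x_lim. assert (H := INR_s_pos).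
  destruct (Nat.eqb_spec k 0); destruct (Nat.eqb_spec k s); try lia;
  unfold Rdiv; try (apply Rinv_0_lt_compat in H; nra).
Qed.

Lemma Omega_Tch_low j : (j < s)%nat -> Omega (Tch j) = 0.
Proof.
  intros Hj. unfold Omega. assert (Hs := INR_s_pos).
  set (a := (INR j + INR s) * PI / INR s).
  assert (E : forall k, (-1) ^ k * Tch j (cn k) = cos (INR k * a)).
  { intros k. unfold cn. rewrite Tch_cos. rewrite <- cos_shift_npi.
    f_equal. unfold a. field. lra. }
  rewrite (sum_ext _ (fun k => 2 / INR s * cos (INR k * a)
             + (- (if Nat.eqb k 0 then 1 / INR s * cos (INR k * a) else 0))
             + (- (if Nat.eqb k s then 1 / INR s * cos (INR k * a) else 0)))).
  2:{ intros k Hk. rewrite <- E. unfold x_lim.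
      destruct (Nat.eqb k 0); destruct (Nat.eqb k s); ring. }
  rewrite !sum_add, !sum_opp, sum_scal, sum_delta, sum_delta by lia.
  assert (Ha2 : 0 < sin (a / 2)).
  { apply sin_gt_0; unfold a.
    - assert (0 <= INR j) by apply pos_INR. assert (HP := PI_RGT_0).
      apply Rmult_lt_0_compat; [|lra]. apply Rmult_lt_0_compat; [|apply Rinv_0_lt_compat; lra]. nra.
    - assert (INR j < INR s) by (apply lt_INR; auto). assert (HP := PI_RGT_0).
      apply (Rmult_lt_reg_r (2 * INR s)); [lra|]. field_simplify; [nra|lra]. }
  assert (F := cos_sum_formula a s).
  assert (Esa : INR s * a = INR (j + s) * PI) by (unfold a; rewrite plus_INR; field; lra).
  replace ((INR s + 1 / 2) * a) with (INR s * a + a / 2) in F by field.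
  rewrite sin_plus, Esa, sin_npi, cos_npi in F.
  rewrite Esa, cos_npi. simpl (INR 0). rewrite Rmult_0_l, cos_0.
  assert (Hsum : sum_f_R0 (fun k => cos (INR k * a)) s = ((-1) ^ (j + s) + 1) / 2).
  { apply (Rmult_eq_reg_l (2 * sin (a / 2))); [|lra]. rewrite F. field. }
  rewrite Hsum. field. lra.
Qed.

Lemma Omega_Tch_s : Omega (Tch s) = 2.
Proof.
  unfold Omega. rewrite <- x_lim_sum. apply sum_ext. intros k Hk.
  unfold cn. rewrite Tch_cos. assert (Hs := INR_s_pos).
  replace (INR s * (INR k * PI / INR s)) with (INR k * PI) by (field; lra).
  rewrite cos_npi. replace ((-1) ^ k * x_lim s k * (-1) ^ k) with (((-1)^k * (-1)^k) * x_lim s k) by ring.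
  rewrite neg1_pow_sq. ring.
Qed.

Definition yl (k : nat) : R := (-1) ^ k * x_lim s k.

Lemma cn_moments_aux : forall i, (i <= s - 1)%nat -> forall i', (i' <= i)%nat ->
  sum_f_R0 (fun k => yl k * cn k ^ i') s = 0.
Proof.
  induction i; intros Hi i' Hi'.
  - assert (i' = 0%nat) by lia; subst.
    rewrite <- (Omega_Tch_low 0) by lia. unfold Omega, yl. apply sum_ext; intros; simpl; ring.
  - destruct (Nat.eq_dec i' (S i)) as [->|]; [|apply IHi; lia].
    assert (HL := Tch_lead i).
    assert (E := annih_lead yl cn s i (Tch (S i)) (2 ^ i)
                  ltac:(intros i'' Hi''; apply IHi; lia) HL).
    assert (E2 : sum_f_R0 (fun k => yl k * Tch (S i) (cn k)) s = 0).
    { rewrite <- (Omega_Tch_low (S i)) by lia. unfold Omega, yl. apply sum_ext; intros; ring. }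
    rewrite E2 in E. assert (0 < 2 ^ i) by (apply pow_lt; lra).
    symmetry in E. apply Rmult_integral in E. destruct E; [lra|auto].
Qed.

Lemma cn_moments i : (i <= s - 1)%nat ->
  sum_f_R0 (fun k => yl k * cn k ^ i) s = 0.
Proof. intros; apply (cn_moments_aux i); auto. Qed.

Lemma cn_moment_s : sum_f_R0 (fun k => yl k * cn k ^ s) s = 2 / 2 ^ (s - 1).
Proof.
  assert (HL := Tch_lead (s - 1)). replace (S (s - 1)) with s in HL by lia.
  assert (E := annih_lead yl cn s (s - 1) (Tch s) (2 ^ (s - 1))
                ltac:(intros i' Hi'; apply cn_moments; lia) HL).
  replace (S (s - 1)) with s in E by lia.
  assert (E2 : sum_f_R0 (fun k => yl k * Tch s (cn k)) s = 2).
  { rewrite <- Omega_Tch_s. unfold Omega, yl. apply sum_ext; intros; ring. }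
  rewrite E2 in E. assert (0 < 2 ^ (s - 1)) by (apply pow_lt; lra).
  rewrite E at 1. field. lra.
Qed.

Lemma un_moments i : (i <= s - 1)%nat ->
  sum_f_R0 (fun k => yl k * un k ^ i) s = 0.
Proof.
  intros Hi.
  rewrite (sum_ext _ (fun k => yl k * (fun x => (- (1/2) * x + 1/2) ^ i) (cn k)))
    by (intros; rewrite un_cn; auto).
  apply (annih yl cn s (s - 1) (fun x => (- (1/2) * x + 1/2) ^ i)). { intros; apply cn_moments; auto. }
  apply Pol_mono with i; auto. apply Pol_aff_pow.
Qed.

Lemma un_moment_s : sum_f_R0 (fun k => yl k * un k ^ s) s = (-1) ^ s * 4 / 4 ^ s.
Proof.
  rewrite (sum_ext _ (fun k => yl k * (fun x => (- (1/2) * x + 1/2) ^ S (s - 1)) (cn k)))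
    by (intros; rewrite un_cn; replace (S (s - 1)) with s by lia; auto).
  rewrite (annih_lead yl cn s (s - 1) (fun x => (- (1/2) * x + 1/2) ^ S (s - 1)) ((- (1/2)) ^ S (s - 1))).
  - replace (S (s - 1)) with s by lia. rewrite cn_moment_s.
    assert (Es : s = S (s - 1)) by lia. revert Es. generalize (s - 1)%nat. intros m Em. rewrite Em.
    cbn [pow].
    replace (4 ^ m) with (2 ^ m * 2 ^ m) by (rewrite <- Rpow_mult_distr; f_equal; ring).
    replace ((- (1/2)) ^ m) with ((-1) ^ m / 2 ^ m)
      by (unfold Rdiv; rewrite <- pow_inv, <- Rpow_mult_distr; f_equal; field).
    assert (0 < 2 ^ m) by (apply pow_lt; lra). field. lra.
  - intros; apply cn_moments; lia.
  - apply Lead_aff_pow.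
Qed.

Lemma x_lim_lsys : lsys s un (x_lim s).
Proof.
  split; [|split].
  - intros i Hi. rewrite <- (un_moments i) by lia. apply sum_ext; intros; unfold yl; ring.
  - rewrite <- (un_moments 0) by lia. apply sum_ext; intros; unfold yl; simpl; ring.
  - apply x_lim_sum.
Qed.

Lemma Aw_un : Aw un s = 2 * 4 ^ s / 4.
Proof.
  destruct (lsys_unique un s (x_lim s) ltac:(lia) un_incr x_lim_lsys) as [_ H].
  rewrite (sum_ext _ (fun k => yl k * un k ^ s)) in H by (intros; unfold yl; ring).
  rewrite un_moment_s in H. assert (HA := Aw_pos un s un_incr).
  assert (0 < 4 ^ s) by (apply pow_lt; lra).
  assert (Hn := neg1_pow_sq s).
  assert (H3 : 4 / 4 ^ s = 2 / Aw un s).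
  { replace (4 / 4 ^ s) with ((-1) ^ s * ((-1) ^ s * 4 / 4 ^ s))
      by (unfold Rdiv; rewrite <- Rmult_assoc, <- Rmult_assoc, Hn; ring).
    rewrite H. replace ((-1) ^ s * (2 * (-1) ^ s / Aw un s)) with (((-1) ^ s * (-1) ^ s) * (2 / Aw un s))
      by (unfold Rdiv; ring). rewrite Hn. ring. }
  assert (E : 4 * Aw un s = 2 * 4 ^ s).
  { replace (4 * Aw un s) with ((4 / 4 ^ s) * (4 ^ s * Aw un s)) by (field; lra).
    rewrite H3. field. lra. }
  lra.
Qed.

Lemma x_lim_solx k : (k <= s)%nat -> x_lim s k = solx un s k.
Proof.
  intros Hk. apply (lsys_unique un s (x_lim s) ltac:(lia) un_incr x_lim_lsys); auto.
Qed.

End Nodes.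

Lemma uniform_fin (P : nat -> nat -> Prop) n :
  (forall k, (k <= n)%nat -> exists N, forall M, (N <= M)%nat -> P M k) ->
  exists N, forall M, (N <= M)%nat -> forall k, (k <= n)%nat -> P M k.
Proof.
  induction n; intros H.
  - destruct (H 0%nat (le_n _)) as [N HN]. exists N. intros M HM k Hk.
    assert (k = 0%nat) by lia; subst; auto.
  - destruct IHn as [N1 H1]; [intros; apply H; lia|].
    destruct (H (S n) (le_n _)) as [N2 H2]. exists (max N1 N2). intros M HM k Hk.
    destruct (Nat.eq_dec k (S n)) as [->|]; [apply H2; lia|apply H1; lia].
Qed.

Lemma CV_ext (u v : nat -> R) l : (exists N0, forall n, (N0 <= n)%nat -> u n = v n) ->
  Un_cv u l -> Un_cv v l.
Proof.
  intros [N0 HN0] H eps Heps. destruct (H eps Heps) as [N HN]. exists (max N N0).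
  intros n Hn. rewrite <- HN0 by lia. apply HN. lia.
Qed.

Lemma CV_const (c : R) : Un_cv (fun _ => c) c.
Proof. intros eps Heps. exists 0%nat. intros. unfold R_dist. rewrite Rminus_diag, Rabs_R0. auto. Qed.

Lemma CV_inv (u : nat -> R) l : l <> 0 -> Un_cv u l -> Un_cv (fun n => / u n) (/ l).
Proof.
  intros Hl H eps Heps.
  assert (Hal : 0 < Rabs l) by (apply Rabs_pos_lt; auto).
  destruct (H (Rabs l / 2)) as [N1 H1]; [lra|].
  destruct (H (eps * (Rabs l * Rabs l) / 2)) as [N2 H2].
  { apply Rmult_lt_0_compat; [apply Rmult_lt_0_compat; auto; nra|lra]. }
  exists (max N1 N2). intros n Hn.
  specialize (H1 n ltac:(lia)). specialize (H2 n ltac:(lia)). unfold R_dist in *.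
  assert (Hu : Rabs l / 2 < Rabs (u n)).
  { assert (Rabs l <= Rabs (u n) + Rabs (u n - l)).
    { replace l with (u n - (u n - l)) at 1 by ring. apply Rabs_triang_inv2 || idtac.
      eapply Rle_trans; [apply Rabs_triang|]. rewrite Rabs_Ropp. lra. }
    lra. }
  assert (Hun : u n <> 0) by (intro Z; rewrite Z, Rabs_R0 in Hu; lra).
  replace (/ u n - / l) with ((l - u n) / (u n * l)) by (field; auto).
  unfold Rdiv. rewrite Rabs_mult, Rabs_inv, Rabs_mult.
  rewrite <- Rabs_Ropp. replace (- (l - u n)) with (u n - l) by ring.
  apply (Rmult_lt_reg_r (Rabs (u n) * Rabs l)); [nra|].
  rewrite Rmult_assoc, Rinv_l by (apply Rgt_not_eq; nra). rewrite Rmult_1_r.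
  apply Rlt_le_trans with (eps * (Rabs l * Rabs l) / 2); auto.
  assert (0 < eps * Rabs l) by nra. nra.
Qed.

Lemma CV_sum (f : nat -> nat -> R) (l : nat -> R) N :
  (forall k, (k <= N)%nat -> Un_cv (fun M => f M k) (l k)) ->
  Un_cv (fun M => sum_f_R0 (f M) N) (sum_f_R0 l N).
Proof.
  induction N; intros H; simpl; [apply H; lia|].
  apply CV_plus; [apply IHN; intros; apply H; lia|apply H; lia].
Qed.

Lemma CV_prod (f : nat -> nat -> R) (l : nat -> R) N :
  (forall k, (k <= N)%nat -> Un_cv (fun M => f M k) (l k)) ->
  Un_cv (fun M => prod_f_R0 (f M) N) (prod_f_R0 l N).
Proof.
  induction N; intros H; simpl; [apply H; lia|].
  apply CV_mult; [apply IHN; intros; apply H; lia|apply H; lia].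
Qed.

Lemma CV_minus' (u v : nat -> R) a b : Un_cv u a -> Un_cv v b -> Un_cv (fun n => u n - v n) (a - b).
Proof.
  intros Hu Hv. apply (CV_ext (fun n => u n + (-1) * v n)).
  { exists 0%nat; intros; ring. }
  replace (a - b) with (a + (-1) * b) by ring. apply CV_plus; auto.
  apply CV_mult; auto. apply CV_const.
Qed.

Lemma CV_eps (u : nat -> R) l : Un_cv u l ->
  forall eps, 0 < eps -> exists N, forall n, (N <= n)%nat -> Rabs (u n - l) < eps.
Proof. intros H eps Heps. destruct (H eps Heps) as [N HN]. exists N. exact HN. Qed.

Section Finite.
Variable s : nat.
Hypothesis hs : (2 <= s)%nat.

Definition tn (M : nat) (k : nat) : R := INR (nk s M k).

Lemma nk_bounds M k : INR M * un s k - 1 < tn M k <= INR M * un s k.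
Proof.
  unfold tn, nk. fold (un s k).
  set (r := INR M * un s k).
  assert (Hr : 0 <= r) by (apply Rmult_le_pos; [apply pos_INR|apply un_range]).
  destruct (base_Int_part r) as [H1 H2].
  assert (Hz : (0 <= Int_part r)%Z).
  { assert (-1 < IZR (Int_part r)) by lra.
    apply lt_IZR in H. lia. }
  rewrite INR_IZR_INZ, Z2Nat.id by auto. lra.
Qed.

Lemma nk_le_M M k : (nk s M k <= M)%nat.
Proof.
  apply INR_le. destruct (nk_bounds M k) as [_ H]. unfold tn in H.
  assert (H1 := un_range s k). assert (0 <= INR M) by apply pos_INR. nra.
Qed.

Lemma nk_gap : exists N, forall M, (N <= M)%nat -> forall k, (k < s)%nat ->
  (nk s M k + 3 < nk s M (S k))%nat.
Proof.
  destruct (uniform_fin (fun M k => (k < s)%nat -> (nk s M k + 3 < nk s M (S k))%nat) s) as [N HN].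
  - intros k Hk. destruct (Nat.lt_ge_cases k s) as [Hks|Hks].
    + assert (Hd : 0 < un s (S k) - un s k) by (assert (H := un_incr s hs k (S k)); lra || (apply Rlt_0_minus; apply un_incr; auto; lia)).
      destruct (INR_archimed (un s (S k) - un s k) 4 Hd) as [N HN].
      exists N. intros M HM _.
      assert (INR N <= INR M) by (apply le_INR; auto).
      destruct (nk_bounds M k) as [_ A]. destruct (nk_bounds M (S k)) as [B _].
      unfold tn in *.
      assert (INR (nk s M k) + 3 < INR (nk s M (S k))) by nra.
      apply INR_lt. rewrite plus_INR. simpl (INR 3). lra.
    + exists 0%nat. intros; lia.
  - exists N. intros M HM k Hk. apply (HN M HM k); auto; lia.
Qed.

Lemma tn_incr_of_gap M : (forall k, (k < s)%nat -> (nk s M k + 3 < nk s M (S k))%nat) ->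
  incr_on (tn M) s.
Proof.
  intros H j k Hjk Hk. unfold tn. apply lt_INR.
  induction k; [lia|].
  destruct (Nat.eq_dec j k) as [->|]; [specialize (H k ltac:(lia)); lia|].
  specialize (IHk ltac:(lia) ltac:(lia)). specialize (H k ltac:(lia)). lia.
Qed.

Definition rn (M : nat) (k : nat) : R := tn M k / INR M.

Lemma rn_cv k : Un_cv (fun M => rn M k) (un s k).
Proof.
  intros eps Heps. destruct (INR_archimed eps 1 Heps) as [N HN].
  exists (S N). intros M HM. unfold R_dist, rn.
  assert (HMp : 0 < INR M) by (apply lt_0_INR; lia).
  assert (INR (S N) <= INR M) by (apply le_INR; auto). rewrite S_INR in H.
  destruct (nk_bounds M k) as [A B].
  replace (tn M k / INR M - un s k) with ((tn M k - INR M * un s k) / INR M) by (field; lra).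
  unfold Rdiv. rewrite Rabs_mult, Rabs_inv, (Rabs_pos_eq (INR M)) by lra.
  apply (Rmult_lt_reg_r (INR M)); auto. rewrite Rmult_assoc, Rinv_l, Rmult_1_r by lra.
  apply Rle_lt_trans with 1.
  - rewrite Rabs_left1 by lra. lra.
  - nra.
Qed.

Lemma pexc_scale (c : R) (t : nat -> R) N k :
  prod_f_R0 (fun j => if Nat.eqb j k then 1 else c * t k - c * t j) N =
  c ^ (if Nat.leb k N then N else S N) * prod_f_R0 (fun j => if Nat.eqb j k then 1 else t k - t j) N.
Proof.
  induction N.
  - simpl. destruct (Nat.eqb_spec 0 k); destruct k; try lia; simpl; ring.
  - cbn [prod_f_R0]. rewrite IHN.
    destruct (Nat.eqb_spec (S N) k).
    + subst. rewrite Nat.leb_refl. destruct (Nat.leb_spec (S N) N); [lia|]. simpl; ring.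
    + destruct (Nat.leb_spec k N); destruct (Nat.leb_spec k (S N)); try lia; simpl; ring.
Qed.

Lemma wdd_scale c t k : c <> 0 -> (k <= s)%nat ->
  wdd (fun j => c * t j) s k = / c ^ s * wdd t s k.
Proof.
  intros Hc Hk. unfold wdd, pexc. rewrite pexc_scale.
  rewrite (proj2 (Nat.leb_le k s) Hk). rewrite Rinv_mult. reflexivity.
Qed.

Lemma Aw_scale c t : c <> 0 -> Aw (fun j => c * t j) s = / c ^ s * Aw t s.
Proof.
  intros Hc. unfold Aw, aw. rewrite <- sum_scal. apply sum_ext. intros k Hk.
  rewrite wdd_scale by auto. ring.
Qed.

Lemma solx_scale c t k : c <> 0 -> (k <= s)%nat -> incr_on t s ->
  solx (fun j => c * t j) s k = solx t s k.
Proof.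
  intros Hc Hk Ht. unfold solx. rewrite Aw_scale by auto. unfold aw. rewrite wdd_scale by auto.
  assert (0 < Aw t s) by (apply Aw_pos; auto). assert (c ^ s <> 0) by (apply pow_nonzero; auto).
  field. split; [lra|auto].
Qed.

Lemma tn_rn M : (1 <= M)%nat -> forall k, tn M k = INR M * rn M k.
Proof.
  intros HM k. unfold rn. assert (0 < INR M) by (apply lt_0_INR; lia). field. lra.
Qed.

Lemma pexc_cv k : Un_cv (fun M => pexc (rn M) s k) (pexc (un s) s k).
Proof.
  unfold pexc. apply (CV_prod (fun M j => if Nat.eqb j k then 1 else rn M k - rn M j)
                               (fun j => if Nat.eqb j k then 1 else un s k - un s j)).
  intros j Hj. destruct (Nat.eqb j k); [apply CV_const|].
  apply CV_minus'; apply rn_cv.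
Qed.

Lemma aw_cv k : (k <= s)%nat -> Un_cv (fun M => aw (rn M) s k) (aw (un s) s k).
Proof.
  intros Hk. unfold aw, wdd.
  apply CV_mult; [apply CV_const|]. apply CV_inv; [|apply pexc_cv].
  apply pexc_nz; auto. apply incr_inj, un_incr; auto.
Qed.

Lemma Aw_cv : Un_cv (fun M => Aw (rn M) s) (Aw (un s) s).
Proof. unfold Aw. apply (CV_sum (fun M => aw (rn M) s) (aw (un s) s)). intros; apply aw_cv; auto. Qed.

Lemma solx_cv k : (k <= s)%nat -> Un_cv (fun M => solx (rn M) s k) (x_lim s k).
Proof.
  intros Hk. rewrite x_lim_solx by auto. unfold solx, Rdiv.
  apply CV_mult; [apply CV_mult; [apply CV_const|apply aw_cv; auto]|].
  apply CV_inv; [|apply Aw_cv]. assert (0 < Aw (un s) s) by (apply Aw_pos, un_incr; auto). lra.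
Qed.

End Finite.

Definition Dg (l : nat) (m : R) : R :=
  match l with
  | O => 1
  | 1%nat => 0
  | 2%nat => 0
  | S (S (S q)) => m ^ S q
  end.

Lemma ann_zero i j : j <> S i -> ann i j = RtoC 0.
Proof. intros H. unfold ann. destruct (Nat.eqb_spec (S i) j); [lia|reflexivity]. Qed.

Lemma gen_entry M l i j : (i <= M)%nat -> (j <= M)%nat -> j <> S i -> i <> S j ->
  gen M l i j = if Nat.eqb i j then RtoC (Dg l (INR i)) else RtoC 0.
Proof.
  intros Hi Hj H1 H2.
  destruct l as [|[|[|q]]].
  - change (gen M 0 i j) with (mid i j). unfold mid. destruct (Nat.eqb i j); reflexivity.
  - change (gen M 1 i j) with (madd ann adag i j). unfold madd, adag. rewrite (ann_zero i j), (ann_zero j i) by auto.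
    destruct (Nat.eqb i j); apply cplx_eq; simpl; ring.
  - change (gen M 2 i j) with (mscale Ci (msub ann adag) i j). unfold mscale, msub, adag. rewrite (ann_zero i j), (ann_zero j i) by auto.
    destruct (Nat.eqb i j); apply cplx_eq; simpl; ring.
  - change (gen M (S (S (S q))) i j) with (mpow M (numop M) (S q) i j).
    rewrite mpow_numop by auto. unfold diagm. reflexivity.
Qed.

Definition pS (s : nat) (c : nat -> R) (m : R) : R :=
  sum_f_R0 (fun l => c l * Dg l m) (s + 1).

Lemma Csum_mul_RtoC (c : nat -> R) (f : nat -> cplx) n :
  (forall l, (l <= n)%nat -> snd (f l) = 0) ->
  Csum (fun l => Cmul (RtoC (c l)) (f l)) n = RtoC (sum_f_R0 (fun l => c l * fst (f l)) n).
Proof.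
  intros H. unfold Csum, RtoC, Cmul. simpl. f_equal.
  - apply sum_ext; intros; rewrite H by auto; ring.
  - apply sum_zero'; intros; rewrite H by auto; ring.
Qed.

Lemma inS_entry M s c i j : (i <= M)%nat -> (j <= M)%nat -> j <> S i -> i <> S j ->
  Csum (fun l => Cmul (RtoC (c l)) (gen M l i j)) (s + 1) =
  if Nat.eqb i j then RtoC (pS s c (INR i)) else RtoC 0.
Proof.
  intros Hi Hj H1 H2.
  rewrite (Csum_ext _ (fun l => Cmul (RtoC (c l)) (if Nat.eqb i j then RtoC (Dg l (INR i)) else RtoC 0)))
    by (intros; rewrite gen_entry; auto).
  rewrite Csum_mul_RtoC by (intros; destruct (Nat.eqb i j); reflexivity).
  unfold pS. destruct (Nat.eqb i j); simpl; auto. f_equal. apply sum_zero'; intros; ring.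
Qed.

Lemma inS_diag M s c i : (i <= M)%nat ->
  Csum (fun l => Cmul (RtoC (c l)) (gen M l i i)) (s + 1) = RtoC (pS s c (INR i)).
Proof. intros Hi. rewrite inS_entry by (auto; lia). rewrite Nat.eqb_refl. auto. Qed.

Lemma Dg_Pol s l : (2 <= s)%nat -> (l <= s + 1)%nat -> Pol (s - 1) (Dg l).
Proof.
  intros Hs Hl. destruct l as [|[|[|q]]]; simpl Dg.
  - apply Pol_const.
  - apply Pol_const.
  - apply Pol_const.
  - apply Pol_mono with (S q); [lia|]. apply Pol_pow.
Qed.

Lemma pS_Pol s c : (2 <= s)%nat -> Pol (s - 1) (pS s c).
Proof.
  intros Hs. unfold pS. apply (Pol_sum (s - 1) (fun l m => c l * Dg l m)).
  intros; apply Pol_scal, Dg_Pol; auto.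
Qed.

Definition cS (b : nat -> R) (l : nat) : R :=
  match l with
  | O => b O
  | 1%nat => 0
  | 2%nat => 0
  | S (S (S q)) => b (S q)
  end.

Lemma pS_cS s b m : (2 <= s)%nat ->
  pS s (cS b) m = sum_f_R0 (fun i => b i * m ^ i) (s - 1).
Proof.
  intros Hs. unfold pS.
  replace (s + 1)%nat with (S (S (S (s - 2)))) by lia.
  replace (s - 1)%nat with (S (s - 2)) by lia.
  rewrite !sum_first. simpl cS. simpl Dg. ring_simplify.
  f_equal.
Qed.

Lemma neg1_pow_even k : (-1) ^ k = if Nat.even k then 1 else -1.
Proof.
  induction k; [reflexivity|]. rewrite Nat.even_succ, <- Nat.negb_even. simpl.
  rewrite IHk. destruct (Nat.even k); simpl; ring.
Qed.

Section Kets.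
Variables (s M : nat) (x : nat -> R).
Hypothesis hs : (2 <= s)%nat.
Hypothesis hgap : forall k, (k < s)%nat -> (nk s M k + 3 < nk s M (S k))%nat.

Notation n := (nk s M).

Lemma n_sep j k : (j < k)%nat -> (k <= s)%nat -> (n j + 3 < n k)%nat.
Proof.
  intros Hjk Hk. induction k; [lia|].
  destruct (Nat.eq_dec j k) as [->|]; [apply hgap; lia|].
  specialize (IHk ltac:(lia) ltac:(lia)). specialize (hgap k ltac:(lia)). lia.
Qed.

Lemma n_inj j k : (j <= s)%nat -> (k <= s)%nat -> n j = n k -> j = k.
Proof.
  intros Hj Hk E. destruct (Nat.lt_total j k) as [h|[h|h]]; auto.
  - assert (H := n_sep j k h Hk); lia.
  - assert (H := n_sep k j h Hj); lia.
Qed.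

Lemma n_far j k : (j <= s)%nat -> (k <= s)%nat -> n j <> S (n k).
Proof.
  intros Hj Hk E. destruct (Nat.lt_total j k) as [h|[h|h]].
  - assert (H := n_sep j k h Hk); lia.
  - subst; lia.
  - assert (H := n_sep k j h Hj); lia.
Qed.

Definition ev (a : nat -> R) (m : nat) : R := sum_f_R0 (fun k => a k * delta m (n k)) s.
Definition a0 (k : nat) : R := if Nat.even k then sqrt (x k) else 0.
Definition a1 (k : nat) : R := if Nat.odd k then sqrt (x k) else 0.

Lemma ket0_eq m : ket0 s M x m = RtoC (ev a0 m).
Proof.
  unfold ket0, ev. rewrite <- Csum_RtoC. apply Csum_ext. intros k Hk.
  unfold a0. rewrite fock_RtoC. destruct (Nat.even k); apply cplx_eq; simpl; ring.
Qed.

Lemma ket1_eq m : ket1 s M x m = RtoC (ev a1 m).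
Proof.
  unfold ket1, ev. rewrite <- Csum_RtoC. apply Csum_ext. intros k Hk.
  unfold a1. rewrite fock_RtoC. destruct (Nat.odd k); apply cplx_eq; simpl; ring.
Qed.

Lemma sum_ev (f : nat -> R) (a : nat -> R) :
  sum_f_R0 (fun b => f b * ev a b) M = sum_f_R0 (fun k => a k * f (n k)) s.
Proof.
  unfold ev.
  rewrite (sum_ext _ (fun b => sum_f_R0 (fun k => a k * (if Nat.eqb b (n k) then f b else 0)) s)).
  - rewrite sum_swap. apply sum_ext. intros k Hk. rewrite sum_scal. f_equal.
    apply sum_delta. apply nk_le_M; auto.
  - intros b Hb. rewrite <- sum_scal. apply sum_ext. intros k Hk. unfold delta.
    destruct (Nat.eqb b (n k)); ring.
Qed.

Lemma ev_node a l : (l <= s)%nat -> ev a (n l) = a l.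
Proof.
  intros Hl. unfold ev.
  rewrite (sum_ext _ (fun k => if Nat.eqb k l then a k else 0)).
  - apply sum_delta; auto.
  - intros k Hk. unfold delta. destruct (Nat.eqb_spec k l) as [E1|E1]; destruct (Nat.eqb_spec (n l) (n k)) as [E2|E2].
    + ring.
    + subst; tauto.
    + exfalso; apply E1. apply n_inj; auto.
    + ring.
Qed.

Lemma bil (a b d : nat -> R) :
  sum_f_R0 (fun m => ev a m * (d m * ev b m)) M = sum_f_R0 (fun k => a k * (b k * d (n k))) s.
Proof.
  rewrite (sum_ext _ (fun m => (d m * ev b m) * ev a m)) by (intros; ring).
  rewrite sum_ev. apply sum_ext. intros k Hk. rewrite ev_node by auto. ring.
Qed.

Lemma inner_real (u v : vec) (f g : nat -> R) :
  (forall m, u m = RtoC (f m)) -> (forall m, v m = RtoC (g m)) ->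
  inner M u v = RtoC (sum_f_R0 (fun m => f m * g m) M).
Proof.
  intros Hu Hv. unfold inner. rewrite <- Csum_RtoC. apply Csum_ext. intros m Hm.
  rewrite Hu, Hv. apply cplx_eq; simpl; ring.
Qed.

Lemma inner_diag (A : mat) (d : nat -> R) (u v : vec) (f g : nat -> R) :
  (forall i j, (i <= M)%nat -> (j <= M)%nat -> A i j = diagm d i j) ->
  (forall m, u m = RtoC (f m)) -> (forall m, v m = RtoC (g m)) ->
  inner M u (mapply M A v) = RtoC (sum_f_R0 (fun m => f m * (d m * g m)) M).
Proof.
  intros HA Hu Hv. unfold inner. rewrite <- Csum_RtoC. apply Csum_ext. intros m Hm.
  rewrite (mapply_diag M A d v m Hm HA). rewrite Hu, Hv. apply cplx_eq; simpl; ring.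
Qed.

Hypothesis hx : forall k, (k <= s)%nat -> 0 <= x k.

Lemma a0a0 k : (k <= s)%nat -> a0 k * a0 k = if Nat.even k then x k else 0.
Proof. intros Hk. unfold a0. destruct (Nat.even k); [apply sqrt_sqrt; auto|ring]. Qed.
Lemma a1a1 k : (k <= s)%nat -> a1 k * a1 k = if Nat.even k then 0 else x k.
Proof. intros Hk. unfold a1. rewrite <- Nat.negb_even. destruct (Nat.even k); simpl; [ring|apply sqrt_sqrt; auto]. Qed.
Lemma a0a1 k : a0 k * a1 k = 0.
Proof. unfold a0, a1. rewrite <- Nat.negb_even. destruct (Nat.even k); simpl; ring. Qed.

Lemma even_part (g : nat -> R) :
  sum_f_R0 (fun k => (if Nat.even k then x k else 0) * g k) s =
  (sum_f_R0 (fun k => x k * g k) s + sum_f_R0 (fun k => (-1) ^ k * x k * g k) s) / 2.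
Proof.
  rewrite <- sum_add. unfold Rdiv. rewrite Rmult_comm, <- sum_scal. apply sum_ext. intros k Hk.
  rewrite neg1_pow_even. destruct (Nat.even k); field.
Qed.

Lemma odd_part (g : nat -> R) :
  sum_f_R0 (fun k => (if Nat.even k then 0 else x k) * g k) s =
  (sum_f_R0 (fun k => x k * g k) s - sum_f_R0 (fun k => (-1) ^ k * x k * g k) s) / 2.
Proof.
  unfold Rminus. rewrite <- sum_opp, <- sum_add. unfold Rdiv. rewrite Rmult_comm, <- sum_scal. apply sum_ext. intros k Hk.
  rewrite neg1_pow_even. destruct (Nat.even k); field.
Qed.

End Kets.

Lemma mmul_real_left M (P X : mat) (p : nat -> nat -> R) i j :
  (forall i a, P i a = RtoC (p i a)) ->
  mmul M P X i j = (sum_f_R0 (fun a => p i a * fst (X a j)) M, sum_f_R0 (fun a => p i a * snd (X a j)) M).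
Proof.
  intros HP. unfold mmul, Csum. f_equal; apply sum_ext; intros; rewrite HP; simpl; ring.
Qed.

Lemma mmul_real_right M (P X : mat) (p : nat -> nat -> R) a j :
  (forall i a, P i a = RtoC (p i a)) ->
  mmul M X P a j = (sum_f_R0 (fun b => fst (X a b) * p b j) M, sum_f_R0 (fun b => snd (X a b) * p b j) M).
Proof.
  intros HP. unfold mmul, Csum. f_equal; apply sum_ext; intros; rewrite HP; simpl; ring.
Qed.

Section PSP.
Variables (s M : nat) (x : nat -> R).
Hypothesis hs : (2 <= s)%nat.
Hypothesis hgap : forall k, (k < s)%nat -> (nk s M k + 3 < nk s M (S k))%nat.
Notation n := (nk s M).
Notation ev := (ev s M).
Notation a0 := (a0 x).
Notation a1 := (a1 x).

Definition pe (i j : nat) : R := ev a0 i * ev a0 j + ev a1 i * ev a1 j.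

Lemma projP_eq i j : projP s M x i j = RtoC (pe i j).
Proof.
  unfold projP, madd, outer, pe. rewrite !ket0_eq, !ket1_eq. apply cplx_eq; simpl; ring.
Qed.

Lemma RSW (B : nat -> nat -> R) (al : nat -> R) i j :
  (forall k l, (k <= s)%nat -> (l <= s)%nat -> B (n l) (n k) = if Nat.eqb k l then al l else 0) ->
  sum_f_R0 (fun a => pe i a * sum_f_R0 (fun b => B a b * pe b j) M) M =
  ev a0 i * (ev a0 j * sum_f_R0 (fun l => a0 l * (a0 l * al l)) s
             + ev a1 j * sum_f_R0 (fun l => a0 l * (a1 l * al l)) s) +
  ev a1 i * (ev a0 j * sum_f_R0 (fun l => a1 l * (a0 l * al l)) s
             + ev a1 j * sum_f_R0 (fun l => a1 l * (a1 l * al l)) s).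
Proof.
  intros HB.
  set (Z := fun (bet : nat -> R) (a : nat) => sum_f_R0 (fun k => bet k * B a (n k)) s).
  assert (E1 : forall a, sum_f_R0 (fun b => B a b * pe b j) M = ev a0 j * Z a0 a + ev a1 j * Z a1 a).
  { intros a. unfold Z. rewrite <- (sum_ev s M hs (B a) a0), <- (sum_ev s M hs (B a) a1).
    rewrite <- !sum_scal, <- sum_add. apply sum_ext; intros; unfold pe; ring. }
  rewrite (sum_ext _ (fun a => ev a0 i * (ev a0 a * (ev a0 j * Z a0 a + ev a1 j * Z a1 a))
                             + ev a1 i * (ev a1 a * (ev a0 j * Z a0 a + ev a1 j * Z a1 a))))
    by (intros; rewrite E1; unfold pe; ring).
  rewrite sum_add, !sum_scal.
  assert (E2 : forall (alp : nat -> R) (Y : nat -> R),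
    sum_f_R0 (fun a => ev alp a * Y a) M = sum_f_R0 (fun l => alp l * Y (n l)) s).
  { intros alp Y. rewrite <- (sum_ev s M hs Y alp). apply sum_ext; intros; ring. }
  rewrite !E2.
  assert (E3 : forall bet l, (l <= s)%nat -> Z bet (n l) = bet l * al l).
  { intros bet l Hl. unfold Z.
    rewrite (sum_ext _ (fun k => if Nat.eqb k l then bet k * al l else 0)).
    - rewrite sum_delta by auto. auto.
    - intros k Hk. rewrite HB by auto. destruct (Nat.eqb k l); ring. }
  f_equal; f_equal.
  - rewrite (sum_ext _ (fun l => ev a0 j * (a0 l * (a0 l * al l)) + ev a1 j * (a0 l * (a1 l * al l))))
      by (intros; rewrite !E3 by auto; ring).
    rewrite sum_add, !sum_scal. ring.
  - rewrite (sum_ext _ (fun l => ev a0 j * (a1 l * (a0 l * al l)) + ev a1 j * (a1 l * (a1 l * al l))))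
      by (intros; rewrite !E3 by auto; ring).
    rewrite sum_add, !sum_scal. ring.
Qed.

Hypothesis hx : forall k, (k <= s)%nat -> 0 <= x k.
Hypothesis hmom : forall i, (i <= s - 1)%nat ->
  sum_f_R0 (fun k => (-1) ^ k * x k * INR (n k) ^ i) s = 0.

Lemma psp_main (Sm : mat) : in_S M s Sm ->
  exists lam : R, mat_eq M (mmul M (projP s M x) (mmul M Sm (projP s M x)))
                          (mscale (RtoC lam) (projP s M x)).
Proof.
  intros [c Hc].
  set (S' := fun i j => Csum (fun l => Cmul (RtoC (c l)) (gen M l i j)) (s + 1)).
  set (al := fun l => pS s c (INR (n l))).
  set (lam := sum_f_R0 (fun l => a0 l * (a0 l * al l)) s).
  exists lam. intros i j Hi Hj.
  rewrite (mmul_real_left M _ _ (fun i a => pe i a)) by apply projP_eq.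
  unfold mscale. rewrite projP_eq.
  assert (HX : forall a, (a <= M)%nat -> mmul M Sm (projP s M x) a j =
      (sum_f_R0 (fun b => fst (S' a b) * pe b j) M, sum_f_R0 (fun b => snd (S' a b) * pe b j) M)).
  { intros a Ha. rewrite (mmul_real_right M _ _ (fun i a => pe i a)) by apply projP_eq.
    f_equal; apply sum_ext; intros b Hb; rewrite Hc by auto; reflexivity. }
  assert (HB : forall k l, (k <= s)%nat -> (l <= s)%nat ->
     S' (n l) (n k) = if Nat.eqb k l then RtoC (al l) else RtoC 0).
  { intros k l Hk Hl. unfold S'. rewrite inS_entry.
    - destruct (Nat.eqb_spec k l) as [E1|E1]; destruct (Nat.eqb_spec (n l) (n k)) as [E2|E2]; subst; auto; try tauto.
      exfalso. apply E1. apply (n_inj s M hs hgap) in E2; auto.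
    - apply nk_le_M; auto.
    - apply nk_le_M; auto.
    - apply (n_far s M hs hgap); auto.
    - apply (n_far s M hs hgap); auto. }
  assert (HB1 : forall k l, (k <= s)%nat -> (l <= s)%nat ->
     fst (S' (n l) (n k)) = if Nat.eqb k l then al l else 0).
  { intros; rewrite HB by auto; destruct (Nat.eqb k l); reflexivity. }
  assert (HB2 : forall k l, (k <= s)%nat -> (l <= s)%nat ->
     snd (S' (n l) (n k)) = if Nat.eqb k l then 0 else 0).
  { intros; rewrite HB by auto; destruct (Nat.eqb k l); reflexivity. }
  assert (G01 : forall g : nat -> R, sum_f_R0 (fun l => a0 l * (a1 l * g l)) s = 0).
  { intros g. apply sum_zero'. intros. replace (a0 k * (a1 k * g k)) with ((a0 k * a1 k) * g k) by ring.
    rewrite a0a1. ring. }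
  assert (G10 : forall g : nat -> R, sum_f_R0 (fun l => a1 l * (a0 l * g l)) s = 0).
  { intros g. apply sum_zero'. intros. replace (a1 k * (a0 k * g k)) with ((a0 k * a1 k) * g k) by ring.
    rewrite a0a1. ring. }
  assert (Hmomal : sum_f_R0 (fun k => (-1) ^ k * x k * al k) s = 0).
  { unfold al.
    apply (annih (fun k => (-1) ^ k * x k) (fun k => INR (n k)) s (s - 1) (pS s c)).
    - intros; apply hmom; auto.
    - apply pS_Pol; auto. }
  assert (G00 : lam = sum_f_R0 (fun l => a1 l * (a1 l * al l)) s).
  { unfold lam.
    rewrite (sum_ext _ (fun k => (if Nat.even k then x k else 0) * al k))
      by (intros k Hk; rewrite <- (a0a0 s x hx k Hk); ring).
    rewrite (sum_ext (fun l => a1 l * (a1 l * al l)) (fun k => (if Nat.even k then 0 else x k) * al k))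
      by (intros k Hk; rewrite <- (a1a1 s x hx k Hk); ring).
    rewrite (even_part s x al), (odd_part s x al), Hmomal. lra. }
  apply cplx_eq; unfold Cmul, RtoC; cbn [fst snd].
  - rewrite (sum_ext _ (fun a => pe i a * sum_f_R0 (fun b => fst (S' a b) * pe b j) M))
      by (intros a Ha; rewrite HX by auto; reflexivity).
    rewrite (RSW (fun a b => fst (S' a b)) al) by auto.
    rewrite G01, G10, <- G00. fold lam. unfold pe. ring.
  - rewrite (sum_ext _ (fun a => pe i a * sum_f_R0 (fun b => snd (S' a b) * pe b j) M))
      by (intros a Ha; rewrite HX by auto; reflexivity).
    rewrite (RSW (fun a b => snd (S' a b)) (fun _ => 0)) by (intros; rewrite HB2 by auto; destruct (Nat.eqb k l); auto).
    rewrite !(sum_zero' (fun l => _ * (_ * 0))) by (intros; ring). ring.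
Qed.

End PSP.

Fixpoint mx (d : nat -> R) (n : nat) : R :=
  match n with
  | O => Rabs (d O)
  | S p => Rmax (mx d p) (Rabs (d (S p)))
  end.

Lemma mx_ge d n k : (k <= n)%nat -> Rabs (d k) <= mx d n.
Proof.
  induction n; intros Hk; simpl.
  - assert (k = 0%nat) by lia; subst; lra.
  - destruct (Nat.eq_dec k (S n)) as [->|]; [apply Rmax_r|].
    eapply Rle_trans; [apply IHn; lia|apply Rmax_l].
Qed.

Lemma mx_attained d n : exists k, (k <= n)%nat /\ mx d n = Rabs (d k).
Proof.
  induction n; simpl; [exists 0%nat; split; auto|].
  destruct IHn as [k [Hk E]]. unfold Rmax. destruct (Rle_dec (mx d n) (Rabs (d (S n)))).
  - exists (S n); split; auto.
  - exists k; split; auto.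
Qed.

Lemma mx_nonneg d n : 0 <= mx d n.
Proof. eapply Rle_trans; [apply Rabs_pos|apply (mx_ge d n 0%nat); lia]. Qed.

Lemma mx_le d n b : (forall k, (k <= n)%nat -> Rabs (d k) <= b) -> mx d n <= b.
Proof.
  destruct (mx_attained d n) as [k [Hk E]]. intros H. rewrite E. auto.
Qed.

Lemma mx_lip f g n e : (forall k, (k <= n)%nat -> Rabs (f k - g k) <= e) ->
  Rabs (mx f n - mx g n) <= e.
Proof.
  intros H. apply Rabs_le. split.
  - destruct (mx_attained g n) as [k [Hk E]]. rewrite E.
    assert (A := mx_ge f n k Hk). assert (B := H k Hk).
    assert (Rabs (g k) <= Rabs (f k) + Rabs (f k - g k)).
    { replace (g k) with (f k - (f k - g k)) at 1 by ring.
      eapply Rle_trans; [apply Rabs_triang|]. rewrite Rabs_Ropp. lra. }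
    lra.
  - destruct (mx_attained f n) as [k [Hk E]]. rewrite E.
    assert (A := mx_ge g n k Hk). assert (B := H k Hk).
    assert (Rabs (f k) <= Rabs (g k) + Rabs (f k - g k)).
    { replace (f k) with (g k + (f k - g k)) at 1 by ring. apply Rabs_triang. }
    lra.
Qed.

Lemma vnorm_fock M m : (m <= M)%nat -> vnorm M (fock m) = 1.
Proof.
  intros Hm. unfold vnorm.
  rewrite (sum_ext _ (fun i => if Nat.eqb i m then 1 else 0)).
  - rewrite sum_delta by auto. apply sqrt_1.
  - intros i Hi. unfold fock, Cnorm2. destruct (Nat.eqb i m); simpl; ring.
Qed.

Lemma mapply_fock M A m i : (m <= M)%nat -> mapply M A (fock m) i = A i m.
Proof.
  intros Hm. unfold mapply, Csum. apply cplx_eq; simpl.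
  - rewrite (sum_ext _ (fun j => if Nat.eqb j m then fst (A i j) else 0)).
    + rewrite sum_delta by auto. auto.
    + intros j Hj. unfold fock. destruct (Nat.eqb j m); simpl; ring.
  - rewrite (sum_ext _ (fun j => if Nat.eqb j m then snd (A i j) else 0)).
    + rewrite sum_delta by auto. auto.
    + intros j Hj. unfold fock. destruct (Nat.eqb j m); simpl; ring.
Qed.

Lemma Cnorm2_nonneg z : 0 <= Cnorm2 z.
Proof. unfold Cnorm2. simpl. nra. Qed.

Lemma opnorm_lower M A r : opnorm M A r -> forall m, (m <= M)%nat -> Rabs (fst (A m m)) <= r.
Proof.
  intros [Hub _] m Hm.
  assert (H := Hub (vnorm M (mapply M A (fock m))) (ex_intro _ (fock m) (conj (vnorm_fock M m Hm) eq_refl))).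
  eapply Rle_trans; [|exact H]. unfold vnorm.
  rewrite <- sqrt_Rsqr_abs. apply sqrt_le_1_alt.
  eapply Rle_trans with (Cnorm2 (A m m)).
  - unfold Cnorm2, Rsqr. simpl. assert (0 <= snd (A m m) * (snd (A m m) * 1)) by nra. nra.
  - rewrite (sum_ext _ (fun i => Cnorm2 (A i m))) by (intros; rewrite mapply_fock; auto).
    apply (sum_term_le (fun i => Cnorm2 (A i m))); auto. intros; apply Cnorm2_nonneg.
Qed.

Lemma opnorm_diag M A d : (forall i j, (i <= M)%nat -> (j <= M)%nat -> A i j = diagm d i j) ->
  opnorm M A (mx d M).
Proof.
  intros HA. split.
  - intros y [v [Hv Hy]]. subst y. unfold vnorm in *.
    assert (Hs : sum_f_R0 (fun m => Cnorm2 (v m)) M = 1).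
    { assert (0 <= sum_f_R0 (fun m => Cnorm2 (v m)) M) by (apply sum_nonneg; intros; apply Cnorm2_nonneg).
      rewrite <- (sqrt_sqrt (sum_f_R0 (fun m => Cnorm2 (v m)) M)) by auto. rewrite Hv. ring. }
    rewrite <- (sqrt_Rsqr (mx d M)) by apply mx_nonneg.
    apply sqrt_le_1_alt.
    rewrite (sum_ext _ (fun m => d m * d m * Cnorm2 (v m))).
    2:{ intros m Hm. rewrite (mapply_diag M A d v m Hm HA). unfold Cnorm2, Cmul, RtoC; simpl. ring. }
    replace (Rsqr (mx d M)) with (Rsqr (mx d M) * sum_f_R0 (fun m => Cnorm2 (v m)) M) by (rewrite Hs; ring).
    rewrite <- sum_scal. apply sum_le. intros m Hm.
    apply Rmult_le_compat_r; [apply Cnorm2_nonneg|].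
    assert (H := mx_ge d M m Hm). assert (0 <= Rabs (d m)) by apply Rabs_pos.
    unfold Rsqr. replace (d m * d m) with (Rabs (d m) * Rabs (d m)).
    + apply Rmult_le_compat; lra.
    + rewrite <- Rabs_mult. apply Rabs_pos_eq. nra.
  - intros b Hb. destruct (mx_attained d M) as [k [Hk E]]. rewrite E.
    apply Hb. exists (fock k). split; [apply vnorm_fock; auto|].
    unfold vnorm.
    rewrite (sum_ext _ (fun i => if Nat.eqb i k then d k * d k else 0)).
    + rewrite sum_delta by auto. rewrite <- sqrt_Rsqr_abs. reflexivity.
    + intros i Hi. rewrite mapply_fock, HA by auto. unfold diagm, Cnorm2.
      destruct (Nat.eqb_spec i k); subst; simpl; ring.
Qed.

Lemma Rabs_le_inv a b : Rabs a <= b -> - b <= a <= b.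
Proof. unfold Rabs; destruct (Rcase_abs a); intros; lra. Qed.

Definition upd (v : nat -> R) (j : nat) (y : R) : nat -> R :=
  fun i => if Nat.eqb i j then y else v i.
Definition dep (d : nat) (G : (nat -> R) -> R) : Prop :=
  forall v v', (forall j, (j < d)%nat -> v j = v' j) -> G v = G v'.
Definition lipc (d : nat) (L : R) (G : (nat -> R) -> R) : Prop :=
  forall v j y, (j < d)%nat -> Rabs (G v - G (upd v j y)) <= L * Rabs (v j - y).
Definition box (d : nat) (c : nat -> R) (rho : R) (v : nat -> R) : Prop :=
  forall j, (j < d)%nat -> Rabs (v j - c j) <= rho.

Lemma lip_cont (f : R -> R) L : 0 <= L -> (forall y z, Rabs (f y - f z) <= L * Rabs (y - z)) ->
  forall x, continuity_pt f x.
Proof.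
  intros HL H x. unfold continuity_pt, continue_in, limit1_in, limit_in. simpl.
  intros eps Heps. exists (eps / (L + 1)). split.
  - apply Rdiv_lt_0_compat; lra.
  - intros z [_ Hz]. unfold R_dist in *.
    eapply Rle_lt_trans; [apply H|].
    apply Rle_lt_trans with ((L + 1) * Rabs (z - x)).
    + assert (0 <= Rabs (z - x)) by apply Rabs_pos. nra.
    + apply (Rmult_lt_reg_l (/ (L + 1))); [apply Rinv_0_lt_compat; lra|].
      rewrite <- Rmult_assoc, Rinv_l, Rmult_1_l by lra.
      unfold Rdiv in Hz. lra.
Qed.

Lemma upd_upd_same v j y z : forall i, upd (upd v j y) j z i = upd v j z i.
Proof. intros i; unfold upd; destruct (Nat.eqb i j); auto. Qed.

Lemma upd_comm v j k y z : j <> k -> forall i, upd (upd v j y) k z i = upd (upd v k z) j y i.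
Proof.
  intros Hjk i; unfold upd. destruct (Nat.eqb_spec i k); destruct (Nat.eqb_spec i j); subst; auto; lia.
Qed.

Lemma upd_self v j : forall i, upd v j (v j) i = v i.
Proof. intros i; unfold upd. destruct (Nat.eqb_spec i j); subst; auto. Qed.

Theorem evt_box : forall d (G : (nat -> R) -> R) L c rho, 0 <= L -> 0 <= rho ->
  dep d G -> lipc d L G ->
  exists vs, box d c rho vs /\ forall v, box d c rho v -> G vs <= G v.
Proof.
  induction d; intros G L c rho HL Hrho Hdep Hlip.
  - exists c. split; [intros j Hj; lia|]. intros v _. right. apply Hdep. intros; lia.
  - set (phi := fun v y => G (upd v d y)).
    assert (Hphi : forall v y z, Rabs (phi v y - phi v z) <= L * Rabs (y - z)).
    { intros v y z. unfold phi.
      assert (E : G (upd v d z) = G (upd (upd v d y) d z)).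
      { apply Hdep. intros; rewrite upd_upd_same; auto. }
      rewrite E. specialize (Hlip (upd v d y) d z ltac:(lia)).
      replace (upd v d y d) with y in Hlip by (unfold upd; rewrite Nat.eqb_refl; auto). auto. }
    assert (Hex : forall v, exists y, (c d - rho <= y <= c d + rho) /\
                         forall z, c d - rho <= z <= c d + rho -> phi v y <= phi v z).
    { intros v. destruct (continuity_ab_min (phi v) (c d - rho) (c d + rho)) as [y [H1 H2]].
      - lra.
      - intros z _. apply (lip_cont (phi v) L HL (Hphi v)).
      - exists y; split; auto. }
    set (ys := fun v => proj1_sig (constructive_indefinite_description _ (Hex v))).
    assert (Hys : forall v, (c d - rho <= ys v <= c d + rho) /\
                         forall z, c d - rho <= z <= c d + rho -> phi v (ys v) <= phi v z).
    { intros v. unfold ys. destruct (constructive_indefinite_description _ (Hex v)). simpl. auto. }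
    set (H := fun v => phi v (ys v)).
    assert (Hdep' : dep d H).
    { intros v v' Hvv'.
      assert (E : forall y, phi v y = phi v' y).
      { intros y. unfold phi. apply Hdep. intros j Hj. unfold upd.
        destruct (Nat.eqb_spec j d); auto. apply Hvv'. lia. }
      unfold H. destruct (Hys v) as [A1 A2]. destruct (Hys v') as [B1 B2].
      apply Rle_antisym.
      - rewrite <- (E (ys v')). apply A2; apply B1.
      - rewrite (E (ys v)). apply B2; apply A1. }
    assert (Hlip' : lipc d L H).
    { intros v j y Hj. set (v' := upd v j y).
      destruct (Hys v) as [A1 A2]. destruct (Hys v') as [B1 B2].
      assert (K1 : phi v' (ys v) <= phi v (ys v) + L * Rabs (v j - y)).
      { unfold phi. assert (E : G (upd v' d (ys v)) = G (upd (upd v d (ys v)) j y)).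
        { apply Hdep. intros i Hi. unfold v'. rewrite upd_comm by lia. auto. }
        rewrite E. specialize (Hlip (upd v d (ys v)) j y ltac:(lia)).
        replace (upd v d (ys v) j) with (v j) in Hlip by (unfold upd; destruct (Nat.eqb_spec j d); [lia|auto]).
        apply Rabs_le_inv in Hlip. lra. }
      assert (K2 : phi v (ys v') <= phi v' (ys v') + L * Rabs (v j - y)).
      { unfold phi. assert (E : G (upd v' d (ys v')) = G (upd (upd v d (ys v')) j y)).
        { apply Hdep. intros i Hi. unfold v'. rewrite upd_comm by lia. auto. }
        rewrite E. specialize (Hlip (upd v d (ys v')) j y ltac:(lia)).
        replace (upd v d (ys v') j) with (v j) in Hlip by (unfold upd; destruct (Nat.eqb_spec j d); [lia|auto]).
        apply Rabs_le_inv in Hlip. lra. }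
      assert (K3 := B2 (ys v) A1). assert (K4 := A2 (ys v') B1).
      fold v'. unfold H. apply Rabs_le. lra. }
    destruct (IHd H L c rho HL Hrho Hdep' Hlip') as [vs [Hvs Hmin]].
    exists (upd vs d (ys vs)). split.
    + intros j Hj. unfold upd. destruct (Nat.eqb_spec j d).
      * subst. destruct (Hys vs) as [A1 _]. apply Rabs_le. lra.
      * apply Hvs. lia.
    + intros v Hv. fold (phi vs (ys vs)). fold (H vs).
      assert (Hvd : box d c rho v) by (intros j Hj; apply Hv; lia).
      apply Rle_trans with (H v); [apply Hmin; auto|].
      unfold H. destruct (Hys v) as [_ A2].
      replace (G v) with (phi v (v d)).
      * apply A2. specialize (Hv d ltac:(lia)). apply Rabs_le_inv in Hv. lra.
      * unfold phi. apply Hdep. intros; apply upd_self.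
Qed.

Lemma prod_one (f : nat -> R) N : (forall k, (k <= N)%nat -> f k = 1) -> prod_f_R0 f N = 1.
Proof.
  induction N; intros H; simpl; [apply H; lia|]. rewrite IHN, H by (auto; lia). ring.
Qed.

Lemma prod_zero (f : nat -> R) N k : (k <= N)%nat -> f k = 0 -> prod_f_R0 f N = 0.
Proof.
  induction N; intros Hk H; simpl.
  - assert (k = 0%nat) by lia; subst; auto.
  - destruct (Nat.eq_dec k (S N)) as [->|]; [rewrite H; ring|]. rewrite IHN by (auto; lia). ring.
Qed.

Lemma Pol_prod_aff (a b : nat -> R) j N :
  Pol (if Nat.leb j N then N else S N)
      (fun x => prod_f_R0 (fun i => if Nat.eqb i j then 1 else a i * x + b i) N).
Proof.
  induction N.
  - destruct (Nat.eqb_spec 0 j); simpl.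
    + subst. simpl. apply Pol_const.
    + destruct j; [lia|]. simpl.
      apply (Pol_ext 1 (fun x => 1 * (a 0%nat * x + b 0%nat))); [intros; ring|].
      apply (Pol_mul_aff 0); apply Pol_const.
  - cbn [prod_f_R0]. destruct (Nat.eqb_spec (S N) j).
    + subst. rewrite Nat.leb_refl. destruct (Nat.leb_spec (S N) N); [lia|].
      apply (Pol_ext (S N) (fun x => prod_f_R0 (fun i => if Nat.eqb i (S N) then 1 else a i * x + b i) N)).
      { intros; ring. }
      auto.
    + destruct (Nat.leb_spec j N); destruct (Nat.leb_spec j (S N)); try lia.
      * apply Pol_mul_aff; auto.
      * apply Pol_mul_aff; auto.
Qed.

Lemma pol_roots d q (t : nat -> R) : Pol d q -> inj_on t d ->
  (forall k, (k <= d)%nat -> q (t k) = 0) -> forall x, q x = 0.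
Proof.
  intros Hq Ht Hz x.
  destruct (classic (exists k, (k <= d)%nat /\ t k = x)) as [[k [Hk E]]|Hn].
  - subst; auto.
  - set (t' := fun k => if Nat.leb k d then t k else x).
    assert (Hi : inj_on t' (S d)).
    { intros j k Hj Hk Hjk. unfold t'.
      destruct (Nat.leb_spec j d); destruct (Nat.leb_spec k d).
      - apply Ht; auto.
      - intro E; apply Hn; exists j; split; auto.
      - intro E; apply Hn; exists k; split; auto.
      - lia. }
    assert (E := annih (wdd t' (S d)) t' (S d) d q).
    assert (HF : forall i, (i <= d)%nat -> sum_f_R0 (fun k => wdd t' (S d) k * t' k ^ i) (S d) = 0).
    { intros i Hi'. fold (Fdd t' (S d) i). rewrite Fdd_val by (auto; lia).
      destruct (Nat.eqb_spec i (S d)); [lia|auto]. }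
    specialize (E HF Hq). cbn [sum_f_R0] in E.
    rewrite (sum_zero' (fun k => wdd t' (S d) k * q (t' k)) d) in E.
    + replace (t' (S d)) with x in E by (unfold t'; destruct (Nat.leb_spec (S d) d); [lia|auto]).
      assert (Hw : wdd t' (S d) (S d) <> 0).
      { unfold wdd. apply Rinv_neq_0_compat. apply pexc_nz; auto. }
      rewrite Rplus_0_l in E. apply Rmult_integral in E. destruct E as [E|E]; [contradiction|auto].
    + intros k Hk. unfold t'. rewrite (proj2 (Nat.leb_le k d) Hk), Hz by auto. ring.
Qed.

Section Minim.
Variables (s M : nat).
Hypothesis hs : (2 <= s)%nat.

Definition lag (j : nat) (x : R) : R :=
  prod_f_R0 (fun i => if Nat.eqb i j then 1 else (x - INR i) / (INR j - INR i)) (s - 1).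

Lemma lag_node i j : (i <= s - 1)%nat -> (j <= s - 1)%nat -> lag j (INR i) = if Nat.eqb i j then 1 else 0.
Proof.
  intros Hi Hj. unfold lag. destruct (Nat.eqb_spec i j).
  - subst. apply prod_one. intros k Hk. destruct (Nat.eqb_spec k j); auto.
    field. intro E. apply Rminus_diag_uniq in E. apply INR_eq in E. lia.
  - apply (prod_zero _ _ i); auto. rewrite (proj2 (Nat.eqb_neq i j) n). unfold Rdiv. ring.
Qed.

Lemma lag_Pol j : (j <= s - 1)%nat -> Pol (s - 1) (lag j).
Proof.
  intros Hj. unfold lag.
  assert (H := Pol_prod_aff (fun i => / (INR j - INR i)) (fun i => - INR i / (INR j - INR i)) j (s - 1)).
  rewrite (proj2 (Nat.leb_le j (s - 1)) Hj) in H.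
  apply (Pol_ext _ _ _ (fun x => prod_ext _ _ _ (fun i _ => _))) in H || idtac.
  eapply Pol_ext; [|exact H]. intros x. apply prod_ext. intros i Hi.
  destruct (Nat.eqb i j); auto. unfold Rdiv. ring.
Qed.

Definition Fb (b : nat -> R) : R :=
  mx (fun m => INR m ^ s - sum_f_R0 (fun i => b i * INR m ^ i) (s - 1)) M.
Definition Fv (v : nat -> R) : R :=
  mx (fun m => INR m ^ s - sum_f_R0 (fun j => v j * lag j (INR m)) (s - 1)) M.

Lemma interp (q : R -> R) : Pol (s - 1) q ->
  forall x, q x = sum_f_R0 (fun j => q (INR j) * lag j x) (s - 1).
Proof.
  intros Hq.
  assert (H := pol_roots (s - 1) (fun x => q x - sum_f_R0 (fun j => q (INR j) * lag j x) (s - 1)) INR).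
  intros x. apply Rminus_diag_uniq. apply H.
  - apply Pol_sub; auto. apply (Pol_sum (s - 1) (fun j x => q (INR j) * lag j x)).
    intros; apply Pol_scal, lag_Pol; auto.
  - intros j k _ _ Hjk E. apply INR_eq in E. auto.
  - intros k Hk.
    rewrite (sum_ext _ (fun j => if Nat.eqb j k then q (INR j) else 0)).
    + rewrite sum_delta by auto. ring.
    + intros j Hj. rewrite lag_node by auto. destruct (Nat.eqb_spec k j); destruct (Nat.eqb_spec j k); subst; try lia; ring.
Qed.

Definition Lc : R := sum_f_R0 (fun m => sum_f_R0 (fun j => Rabs (lag j (INR m))) (s - 1)) M.

Lemma Fv_lip : lipc s Lc Fv.
Proof.
  intros v j y Hj. unfold Fv. apply mx_lip. intros m Hm.
  replace (INR m ^ s - sum_f_R0 (fun j0 => v j0 * lag j0 (INR m)) (s - 1) -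
     (INR m ^ s - sum_f_R0 (fun j0 => upd v j y j0 * lag j0 (INR m)) (s - 1)))
    with (- sum_f_R0 (fun j0 => if Nat.eqb j0 j then (v j - y) * lag j (INR m) else 0) (s - 1)).
  - rewrite Rabs_Ropp, sum_delta by lia. rewrite Rabs_mult, Rmult_comm.
    apply Rmult_le_compat_r; [apply Rabs_pos|].
    unfold Lc. eapply Rle_trans; [|apply (sum_term_le _ M m); auto; intros; apply sum_nonneg; intros; apply Rabs_pos].
    apply (sum_term_le (fun j0 => Rabs (lag j0 (INR m))) (s - 1) j); [intros; apply Rabs_pos|lia].
  - assert (Hd : sum_f_R0 (fun j0 => v j0 * lag j0 (INR m)) (s - 1) -
                  sum_f_R0 (fun j0 => upd v j y j0 * lag j0 (INR m)) (s - 1) =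
                  sum_f_R0 (fun j0 => if Nat.eqb j0 j then (v j - y) * lag j (INR m) else 0) (s - 1)).
    { unfold Rminus. rewrite <- sum_opp, <- sum_add. apply sum_ext. intros i Hi. unfold upd.
      destruct (Nat.eqb_spec i j); subst; ring. }
    rewrite <- Hd. ring.
Qed.

Lemma Fv_dep : dep s Fv.
Proof.
  intros v v' H. unfold Fv. f_equal.
  apply FunctionalExtensionality.functional_extensionality. intros m.
  f_equal. apply sum_ext. intros j Hj. rewrite H by lia. auto.
Qed.

Lemma Lc_nonneg : 0 <= Lc.
Proof. unfold Lc. apply sum_nonneg; intros; apply sum_nonneg; intros; apply Rabs_pos. Qed.

Theorem Fb_min : exists bs, forall b, Fb bs <= Fb b.
Proof.
  set (c := fun j => INR j ^ s).
  set (rho := Fv c).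
  assert (Hrho : 0 <= rho) by apply mx_nonneg.
  destruct (evt_box s Fv Lc c rho Lc_nonneg Hrho Fv_dep Fv_lip) as [vs [Hvs Hmin]].
  assert (Hglob : forall v, Fv vs <= Fv v).
  { intros v. destruct (classic (box s c rho v)) as [Hb|Hb]; [apply Hmin; auto|].
    assert (Hc : box s c rho c) by (intros j Hj; rewrite Rminus_diag, Rabs_R0; auto).
    assert (H1 := Hmin c Hc).
    destruct (le_lt_dec (s - 1) M) as [HM|HM].
    - apply Rle_trans with rho; [auto|].
      apply NNPP. intro Hlt. apply Hb. intros j Hj.
      assert (Hterm := mx_ge (fun m => INR m ^ s - sum_f_R0 (fun j => v j * lag j (INR m)) (s - 1)) M j ltac:(lia)).
      cbv beta in Hterm.
      rewrite (sum_ext _ (fun i => if Nat.eqb i j then v i else 0)) in Hterm.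
      + rewrite sum_delta in Hterm by lia. fold (Fv v) in Hterm. rewrite <- Rabs_Ropp.
        replace (- (v j - c j)) with (INR j ^ s - v j) by (unfold c; ring). lra.
      + intros i Hi. rewrite lag_node by lia. destruct (Nat.eqb_spec j i); destruct (Nat.eqb_spec i j); subst; try lia; ring.
    - assert (Hz : rho = 0).
      { apply Rle_antisym; auto. unfold rho, Fv. apply mx_le. intros m Hm.
        rewrite (sum_ext _ (fun i => if Nat.eqb i m then c i else 0)).
        + rewrite sum_delta by lia. unfold c. rewrite Rminus_diag, Rabs_R0. lra.
        + intros i Hi. rewrite lag_node by lia. destruct (Nat.eqb_spec m i); destruct (Nat.eqb_spec i m); subst; try lia; ring. }
      fold rho in H1. rewrite Hz in H1. apply Rle_trans with 0; auto. apply mx_nonneg. }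
  assert (Hq : Pol (s - 1) (fun x => sum_f_R0 (fun j => vs j * lag j x) (s - 1))).
  { apply (Pol_sum (s - 1) (fun j x => vs j * lag j x)). intros; apply Pol_scal, lag_Pol; auto. }
  destruct Hq as [bs Hbs]. exists bs. intros b.
  assert (E1 : Fb bs = Fv vs).
  { unfold Fb, Fv. f_equal. apply FunctionalExtensionality.functional_extensionality. intros m.
    rewrite Hbs. auto. }
  set (vb := fun j => sum_f_R0 (fun i => b i * INR j ^ i) (s - 1)).
  assert (E2 : Fb b = Fv vb).
  { unfold Fb, Fv. f_equal. apply FunctionalExtensionality.functional_extensionality. intros m.
    f_equal. unfold vb.
    apply (interp (fun x => sum_f_R0 (fun i => b i * x ^ i) (s - 1))).
    exists b. auto. }
  rewrite E1, E2. auto.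
Qed.

End Minim.

Lemma gen_entry_nonadj M l i j : (i <= M)%nat -> (j <= M)%nat -> l <> 1%nat -> l <> 2%nat ->
  gen M l i j = if Nat.eqb i j then RtoC (Dg l (INR i)) else RtoC 0.
Proof.
  intros Hi Hj H1 H2. destruct l as [|[|[|q]]]; try lia.
  - change (gen M 0 i j) with (mid i j). unfold mid. destruct (Nat.eqb i j); reflexivity.
  - change (gen M (S (S (S q))) i j) with (mpow M (numop M) (S q) i j).
    rewrite mpow_numop by auto. unfold diagm. reflexivity.
Qed.

Section MD.
Variables (s M : nat).
Hypothesis hs : (2 <= s)%nat.

Definition Sb (b : nat -> R) : mat :=
  fun i j => Csum (fun l => Cmul (RtoC (cS b l)) (gen M l i j)) (s + 1).

Lemma Sb_inS b : in_S M s (Sb b).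
Proof. exists (cS b). intros i j _ _. reflexivity. Qed.

Lemma Sb_diag b : forall i j, (i <= M)%nat -> (j <= M)%nat ->
  msub (mpow M (numop M) s) (Sb b) i j =
  diagm (fun m => INR m ^ s - sum_f_R0 (fun k => b k * INR m ^ k) (s - 1)) i j.
Proof.
  intros i j Hi Hj. unfold msub. rewrite mpow_numop by auto.
  assert (E : Sb b i j = RtoC (sum_f_R0 (fun l => cS b l * (if Nat.eqb i j then Dg l (INR i) else 0)) (s + 1))).
  { unfold Sb. rewrite <- Csum_RtoC. apply Csum_ext. intros l Hl.
    destruct (Nat.eq_dec l 1) as [->|]; [apply cplx_eq; simpl; ring|].
    destruct (Nat.eq_dec l 2) as [->|]; [apply cplx_eq; simpl; ring|].
    rewrite gen_entry_nonadj by auto. destruct (Nat.eqb i j); apply cplx_eq; simpl; ring. }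
  rewrite E. unfold diagm. destruct (Nat.eqb_spec i j).
  - fold (pS s (cS b) (INR i)). rewrite pS_cS by auto. subst. apply cplx_eq; simpl; ring.
  - rewrite sum_zero' by (intros; ring). apply cplx_eq; simpl; ring.
Qed.

Lemma Sb_opnorm b : opnorm M (msub (mpow M (numop M) s) (Sb b)) (Fb s M b).
Proof. apply opnorm_diag. apply Sb_diag. Qed.

Lemma inS_lower Sm r : in_S M s Sm -> opnorm M (msub (mpow M (numop M) s) Sm) r ->
  exists c, forall m, (m <= M)%nat -> Rabs (INR m ^ s - pS s c (INR m)) <= r.
Proof.
  intros [c Hc] Hr. exists c. intros m Hm.
  assert (H := opnorm_lower M _ r Hr m Hm).
  unfold msub in H. rewrite Hc in H by auto. rewrite inS_diag in H by auto.
  rewrite mpow_numop in H by auto. unfold diagm in H. rewrite Nat.eqb_refl in H.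
  simpl in H. replace (INR m ^ s + - pS s c (INR m)) with (INR m ^ s - pS s c (INR m)) in H by ring.
  auto.
Qed.

Theorem min_dist_exists : exists r, is_min_dist M s r /\ forall b, r <= Fb s M b.
Proof.
  destruct (Fb_min s M hs) as [bs Hbs]. exists (Fb s M bs). split; [split|auto].
  - exists (Sb bs). split; [apply Sb_inS|apply Sb_opnorm].
  - intros Sm r' HS Hr'. destruct (inS_lower Sm r' HS Hr') as [c Hc].
    destruct (pS_Pol s c hs) as [bc Hbc].
    apply Rle_trans with (Fb s M bc); auto.
    unfold Fb. apply mx_le. intros m Hm. rewrite <- Hbc. auto.
Qed.

Lemma min_dist_upper r : is_min_dist M s r -> forall b, r <= Fb s M b.
Proof.
  intros [_ H] b. apply (H (Sb b)); [apply Sb_inS|apply Sb_opnorm].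
Qed.

Hypothesis hM : (1 <= M)%nat.

Definition kap : R := 2 * (INR M / 4) ^ s.

Lemma cheb_coeffs : exists b, forall x,
  x ^ s - sum_f_R0 (fun k => b k * x ^ k) (s - 1) = kap * Tch s (2 / INR M * x + (-1)).
Proof.
  assert (HMp : 0 < INR M) by (apply lt_0_INR; lia).
  assert (HT := Tch_lead (s - 1)). unfold Lead in HT. replace (S (s - 1)) with s in HT by lia.
  assert (H1 := Pol_comp_aff _ _ (2 / INR M) (-1) HT). cbv beta in H1.
  assert (H2 := Lead_aff_pow (s - 1) (2 / INR M) (-1)). unfold Lead in H2.
  replace (S (s - 1)) with s in H2 by lia.
  assert (Hk : kap * 2 ^ (s - 1) * (2 / INR M) ^ s = 1).
  { unfold kap. assert (Es : s = S (s - 1)) by lia. revert Es. generalize (s - 1)%nat. intros m Em. rewrite Em.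
    replace (2 * (INR M / 4) ^ S m * 2 ^ m * (2 / INR M) ^ S m)
      with ((2 * 2 ^ m) * ((INR M / 4) * (2 / INR M)) ^ S m) by (rewrite Rpow_mult_distr; ring).
    replace (INR M / 4 * (2 / INR M)) with (/ 2) by (field; lra).
    replace (2 * 2 ^ m) with (2 ^ S m) by (simpl; ring).
    rewrite <- Rpow_mult_distr. rewrite Rinv_r by lra. apply pow1. }
  assert (HP : Pol (s - 1) (fun x => x ^ s - kap * Tch s (2 / INR M * x + (-1)))).
  { apply (Pol_ext (s - 1) (fun x => (- kap) * (Tch s (2 / INR M * x + -1) - 2 ^ (s - 1) * (2 / INR M * x + -1) ^ s)
                                    + (- (kap * 2 ^ (s - 1))) * ((2 / INR M * x + -1) ^ s - (2 / INR M) ^ s * x ^ s))).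
    - intros x. replace (x ^ s) with ((kap * 2 ^ (s - 1) * (2 / INR M) ^ s) * x ^ s) at 2 by (rewrite Hk; ring).
      ring.
    - apply Pol_add; apply Pol_scal; auto. }
  destruct HP as [b Hb]. exists b. intros x. rewrite <- Hb. ring.
Qed.

Lemma cheb_bound : exists b, Fb s M b <= kap.
Proof.
  destruct cheb_coeffs as [b Hb]. exists b. unfold Fb. apply mx_le. intros m Hm.
  rewrite Hb. rewrite Rabs_mult.
  assert (HMp : 0 < INR M) by (apply lt_0_INR; lia).
  assert (Hkp : 0 <= kap) by (unfold kap; apply Rmult_le_pos; [lra|apply pow_le; lra]).
  rewrite (Rabs_pos_eq kap Hkp).
  assert (HT : Rabs (Tch s (2 / INR M * INR m + -1)) <= 1).
  { apply Tch_bound. assert (0 <= INR m) by apply pos_INR. assert (INR m <= INR M) by (apply le_INR; auto).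
    split.
    - assert (0 <= 2 / INR M * INR m) by (apply Rmult_le_pos; [apply Rlt_le, Rdiv_lt_0_compat; lra|lra]). lra.
    - assert (2 / INR M * INR m <= 2).
      { apply (Rmult_le_reg_r (INR M)); auto. field_simplify; lra. }
      lra. }
  nra.
Qed.

Lemma min_dist_le_kap r : is_min_dist M s r -> r <= kap.
Proof.
  intros H. destruct cheb_bound as [b Hb]. eapply Rle_trans; [apply (min_dist_upper r H b)|auto].
Qed.

End MD.

Section Final.
Variable s : nat.
Hypothesis hs : (2 <= s)%nat.

Definition gapP (M : nat) : Prop := forall k, (k < s)%nat -> (nk s M k + 3 < nk s M (S k))%nat.

Lemma lin_lsys M x : lin_sys s M x -> lsys s (tn s M) x.
Proof. intros H. exact H. Qed.

Lemma lsys_lin M x : lsys s (tn s M) x -> lin_sys s M x.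
Proof. intros H. exact H. Qed.

Lemma hmom_of M x : lin_sys s M x -> forall i, (i <= s - 1)%nat ->
  sum_f_R0 (fun k => (-1) ^ k * x k * INR (nk s M k) ^ i) s = 0.
Proof.
  intros [H1 [H2 H3]] i Hi. destruct i.
  - rewrite <- H2. apply sum_ext; intros; simpl; ring.
  - apply H1. lia.
Qed.

Lemma x_pos M x : gapP M -> lin_sys s M x -> forall k, (k <= s)%nat -> 0 < x k.
Proof.
  intros Hg Hx k Hk. assert (Hi := tn_incr_of_gap s hs M Hg).
  destruct (lsys_unique (tn s M) s x ltac:(lia) Hi (lin_lsys M x Hx)) as [E _].
  rewrite E by auto. apply solx_pos; auto.
Qed.

Lemma sig_sum M x : gapP M -> lin_sys s M x ->
  sig_diff s M x = sum_f_R0 (fun k => (-1) ^ k * x k * INR (nk s M k) ^ s) s.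
Proof.
  intros Hg Hx. assert (Hnn : forall k, (k <= s)%nat -> 0 <= x k) by (intros; left; apply (x_pos M); auto).
  unfold sig_diff, expval.
  assert (HA : forall i j, (i <= M)%nat -> (j <= M)%nat ->
     mpow M (numop M) s i j = diagm (fun m => INR m ^ s) i j) by (intros; apply mpow_numop; auto).
  rewrite (inner_diag M _ _ _ _ (ev s M (a0 x)) (ev s M (a0 x)) HA (ket0_eq s M x) (ket0_eq s M x)).
  rewrite (inner_diag M _ _ _ _ (ev s M (a1 x)) (ev s M (a1 x)) HA (ket1_eq s M x) (ket1_eq s M x)).
  simpl fst. rewrite !(bil s M x hs Hg).
  rewrite (sum_ext (fun k => a0 x k * (a0 x k * INR (nk s M k) ^ s))
                   (fun k => (if Nat.even k then x k else 0) * INR (nk s M k) ^ s))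
    by (intros k Hk; rewrite <- (a0a0 s x Hnn k Hk); ring).
  rewrite (sum_ext (fun k => a1 x k * (a1 x k * INR (nk s M k) ^ s))
                   (fun k => (if Nat.even k then 0 else x k) * INR (nk s M k) ^ s))
    by (intros k Hk; rewrite <- (a1a1 s x Hnn k Hk); ring).
  rewrite even_part, odd_part. field.
Qed.

Lemma sig_val M x : gapP M -> lin_sys s M x -> sig_diff s M x = 2 * (-1) ^ s / Aw (tn s M) s.
Proof.
  intros Hg Hx. rewrite sig_sum by auto.
  apply (lsys_unique (tn s M) s x ltac:(lia) (tn_incr_of_gap s hs M Hg) (lin_lsys M x Hx)).
Qed.

Lemma rn_incr M : (1 <= M)%nat -> gapP M -> incr_on (rn s M) s.
Proof.
  intros HM Hg j k Hjk Hk. unfold rn. assert (0 < INR M) by (apply lt_0_INR; lia).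
  assert (Ht := tn_incr_of_gap s hs M Hg j k Hjk Hk).
  unfold Rdiv. apply Rmult_lt_compat_r; auto. apply Rinv_0_lt_compat; auto.
Qed.

Lemma tn_fun M : (1 <= M)%nat -> tn s M = (fun j => INR M * rn s M j).
Proof. intros HM. apply functional_extensionality. intros k. apply tn_rn; auto. Qed.

Lemma powerRZ_4 : powerRZ 4 (1 - Z.of_nat s) = 4 / 4 ^ s.
Proof.
  replace (1 - Z.of_nat s)%Z with (1 + - Z.of_nat s)%Z by lia.
  rewrite powerRZ_add by lra. rewrite powerRZ_neg', <- pow_powerRZ. simpl. field.
  apply pow_nonzero; lra.
Qed.

Definition Eseq (M : nat) : R := 2 / (Aw (rn s M) s * (4 / 4 ^ s)).

Lemma Eseq_cv : Un_cv Eseq 1.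
Proof.
  assert (H4 : 0 < 4 ^ s) by (apply pow_lt; lra).
  unfold Eseq. unfold Rdiv at 1.
  replace 1 with (2 * / (Aw (un s) s * (4 / 4 ^ s))).
  - apply CV_mult; [apply CV_const|]. apply CV_inv.
    + rewrite Aw_un by auto. apply Rgt_not_eq. unfold Rdiv.
      apply Rmult_lt_0_compat; [nra|]. apply Rmult_lt_0_compat; [lra|apply Rinv_0_lt_compat; lra].
    + apply CV_mult; [apply Aw_cv; auto|apply CV_const].
  - rewrite Aw_un by auto. field. lra.
Qed.

Lemma ratio_eq M x : (1 <= M)%nat -> gapP M -> lin_sys s M x ->
  sig_diff s M x / ((-1) ^ s * INR M ^ s * powerRZ 4 (1 - Z.of_nat s)) = Eseq M.
Proof.
  intros HM Hg Hx. rewrite sig_val, powerRZ_4 by auto. unfold Eseq.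
  rewrite (tn_fun M HM). assert (0 < INR M) by (apply lt_0_INR; lia).
  rewrite (Aw_scale s hs) by lra.
  assert (HA := Aw_pos _ s (rn_incr M HM Hg)).
  assert (0 < 4 ^ s) by (apply pow_lt; lra).
  assert (INR M ^ s <> 0) by (apply pow_nonzero; lra).
  assert ((-1) ^ s <> 0) by apply neg1_pow_nz.
  field. repeat split; auto; lra.
Qed.

Lemma sig_le_2r M x r : gapP M -> lin_sys s M x -> is_min_dist M s r -> Rabs (sig_diff s M x) <= 2 * r.
Proof.
  intros Hg Hx [[Sm [HS Hr]] _].
  destruct (inS_lower s M Sm r HS Hr) as [c Hc].
  rewrite sig_sum by auto.
  assert (Hz : sum_f_R0 (fun k => (-1) ^ k * x k * pS s c (INR (nk s M k))) s = 0).
  { apply (annih (fun k => (-1) ^ k * x k) (fun k => INR (nk s M k)) s (s - 1) (pS s c)).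
    - intros; apply hmom_of; auto.
    - apply pS_Pol; auto. }
  replace (sum_f_R0 (fun k => (-1) ^ k * x k * INR (nk s M k) ^ s) s)
    with (sum_f_R0 (fun k => (-1) ^ k * x k * (INR (nk s M k) ^ s - pS s c (INR (nk s M k)))) s).
  2:{ rewrite (sum_ext _ (fun k => (-1) ^ k * x k * INR (nk s M k) ^ s + - ((-1) ^ k * x k * pS s c (INR (nk s M k)))))
        by (intros; ring).
      rewrite sum_add, sum_opp, Hz. ring. }
  eapply Rle_trans; [apply Rsum_abs|].
  destruct Hx as [H1 [H2 H3]].
  replace (2 * r) with (r * sum_f_R0 (fun k => x k) s) by (rewrite H3; ring).
  rewrite <- sum_scal. apply sum_le. intros k Hk.
  rewrite !Rabs_mult, <- RPow_abs. replace (Rabs (-1)) with 1 by (rewrite Rabs_left; lra). rewrite pow1, Rmult_1_l.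
  assert (0 < x k) by (apply (x_pos M x); auto; split; auto).
  rewrite Rabs_pos_eq by lra. rewrite Rmult_comm. apply Rmult_le_compat_r; [lra|].
  apply Hc. apply nk_le_M; auto.
Qed.

End Final.

Lemma GL K E r d eps : 0 < K -> 0 < d -> d <= 1 -> 3 * d <= eps -> Rabs (E - 1) < d ->
  K * E <= 2 * r -> 2 * r <= K ->
  Rabs (E ^ 2 * K ^ 2 / (4 * r ^ 2) - 1) < eps /\
  Rabs (E ^ 2 - 1) < eps /\
  Rabs (4 * r ^ 2 / K ^ 2 - 1) < eps.
Proof.
  intros HK Hd Hd1 Hde HE H1 H2.
  apply Rabs_def2 in HE. destruct HE as [HE1 HE2].
  assert (HEp : 0 < E) by lra.
  assert (Hr : 0 < r) by nra.
  assert (HE2' : Rabs (E ^ 2 - 1) < eps).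
  { replace (E ^ 2 - 1) with ((E - 1) * (E + 1)) by ring. rewrite Rabs_mult.
    assert (Rabs (E + 1) < 3) by (apply Rabs_def1; lra).
    assert (Rabs (E - 1) < d) by (apply Rabs_def1; lra).
    assert (0 <= Rabs (E - 1)) by apply Rabs_pos. assert (0 <= Rabs (E + 1)) by apply Rabs_pos.
    nra. }
  assert (Hsq : E ^ 2 <= 1 \/ 1 < E ^ 2) by lra.
  assert (A1 : (K * E) ^ 2 <= (2 * r) ^ 2) by (apply pow_incr; nra).
  assert (A2 : (2 * r) ^ 2 <= K ^ 2) by (apply pow_incr; nra).
  assert (HK2 : 0 < K ^ 2) by (apply pow_lt; auto).
  assert (Hr2 : 0 < 4 * r ^ 2) by (assert (0 < r ^ 2) by (apply pow_lt; auto); lra).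
  split; [|split; auto].
  - assert (B1 : E ^ 2 * K ^ 2 / (4 * r ^ 2) <= 1).
    { apply (Rmult_le_reg_r (4 * r ^ 2)); auto. unfold Rdiv. rewrite Rmult_assoc, Rinv_l by lra.
      replace (E ^ 2 * K ^ 2 * 1) with ((K * E) ^ 2) by ring.
      replace (1 * (4 * r ^ 2)) with ((2 * r) ^ 2) by ring. auto. }
    assert (B2 : E ^ 2 <= E ^ 2 * K ^ 2 / (4 * r ^ 2)).
    { apply (Rmult_le_reg_r (4 * r ^ 2)); auto. unfold Rdiv. rewrite Rmult_assoc, Rinv_l by lra.
      replace (4 * r ^ 2) with ((2 * r) ^ 2) by ring.
      assert (0 <= E ^ 2) by (apply pow_le; lra). nra. }
    apply Rabs_def2 in HE2'. apply Rabs_def1; lra.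
  - assert (B1 : 4 * r ^ 2 / K ^ 2 <= 1).
    { apply (Rmult_le_reg_r (K ^ 2)); auto. unfold Rdiv. rewrite Rmult_assoc, Rinv_l by lra.
      replace (4 * r ^ 2) with ((2 * r) ^ 2) by ring. lra. }
    assert (B2 : E ^ 2 <= 4 * r ^ 2 / K ^ 2).
    { apply (Rmult_le_reg_r (K ^ 2)); auto. unfold Rdiv. rewrite Rmult_assoc, Rinv_l by lra.
      replace (4 * r ^ 2) with ((2 * r) ^ 2) by ring.
      replace (E ^ 2 * K ^ 2) with ((K * E) ^ 2) by ring. lra. }
    apply Rabs_def2 in HE2'. apply Rabs_def1; lra.
Qed.

Theorem mainTheorem9 (s : nat) (hs : (2 <= s)%nat) :
  exists M0 : nat,
    (forall M : nat, (M0 <= M)%nat ->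
       (forall k : nat, (k < s)%nat ->
          (nk s M k < nk s M (S k))%nat /\ (nk s M k + 3 <= nk s M (S k))%nat) /\
       (exists x : nat -> R, lin_sys s M x) /\
       (forall x y : nat -> R, lin_sys s M x -> lin_sys s M y ->
          forall k, (k <= s)%nat -> x k = y k) /\
       (forall x : nat -> R, lin_sys s M x ->
          (forall k, (k <= s)%nat -> 0 < x k) /\
          inner M (ket0 s M x) (ket0 s M x) = RtoC 1 /\
          inner M (ket1 s M x) (ket1 s M x) = RtoC 1 /\
          inner M (ket0 s M x) (ket1 s M x) = RtoC 0 /\
          (forall S : mat, in_S M s S ->
             exists lam : R,
               mat_eq M (mmul M (projP s M x) (mmul M S (projP s M x)))
                        (mscale (RtoC lam) (projP s M x))) /\
          inner M (ket0 s M x) (mapply M (mpow M (numop M) s) (ket1 s M x)) = RtoC 0)) /\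
    (forall eps : R, 0 < eps -> exists N : nat, forall (M : nat) (x : nat -> R),
       (N <= M)%nat -> lin_sys s M x ->
       forall k, (k <= s)%nat -> Rabs (x k - x_lim s k) < eps) /\
    (forall eps : R, 0 < eps -> exists N : nat, forall (M : nat) (x : nat -> R),
       (N <= M)%nat -> lin_sys s M x ->
       Rabs (sig_diff s M x / ((-1) ^ s * INR M ^ s * powerRZ 4 (1 - Z.of_nat s)) - 1)
         < eps) /\
    (forall M : nat, (1 <= M)%nat ->
       exists r : R, is_min_dist M s r /\ 2 * r <= 4 * (INR M / 4) ^ s) /\
    (forall t : R, t <> 0 ->
       forall eps : R, 0 < eps -> exists N : nat, forall (M : nat) (x : nat -> R) (r : R),
         (N <= M)%nat -> lin_sys s M x -> is_min_dist M s r ->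
         Rabs (t ^ 2 * sig_diff s M x ^ 2 / (4 * t ^ 2 * r ^ 2) - 1) < eps /\
         Rabs (t ^ 2 * sig_diff s M x ^ 2 / (16 * t ^ 2 * (INR M / 4) ^ (2 * s)) - 1) < eps /\
         Rabs (4 * t ^ 2 * r ^ 2 / (16 * t ^ 2 * (INR M / 4) ^ (2 * s)) - 1) < eps).
Proof.
  destruct (nk_gap s hs) as [Ng HNg].
  exists (max Ng 1). split; [|split; [|split; [|split]]].
  -
    intros M HM. assert (Hg : gapP s M) by (exact (HNg M ltac:(lia))).
    assert (Hinc := tn_incr_of_gap s hs M Hg).
    split; [|split; [|split]].
    + intros k Hk. specialize (Hg k Hk). lia.
    + exists (solx (tn s M) s). apply lsys_lin. apply solx_lsys; auto; lia.
    + intros x y Hx Hy k Hk.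
      rewrite (proj1 (lsys_unique (tn s M) s x ltac:(lia) Hinc (lin_lsys s M x Hx)) k Hk).
      rewrite (proj1 (lsys_unique (tn s M) s y ltac:(lia) Hinc (lin_lsys s M y Hy)) k Hk).
      reflexivity.
    + intros x Hx.
      assert (Hpos := x_pos s hs M x Hg Hx).
      assert (Hnn : forall k, (k <= s)%nat -> 0 <= x k) by (intros; left; auto).
      assert (Hsum := Hx). destruct Hsum as [_ [H2 H3]].
      assert (E0 : sum_f_R0 (fun k => (-1) ^ k * x k * 1) s = 0) by (rewrite <- H2; apply sum_ext; intros; ring).
      assert (E1 : sum_f_R0 (fun k => x k * 1) s = 2) by (rewrite <- H3; apply sum_ext; intros; ring).
      split; [auto|split; [|split; [|split; [|split]]]].
      * rewrite (inner_real M _ _ _ _ (ket0_eq s M x) (ket0_eq s M x)). f_equal.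
        rewrite (sum_ext _ (fun m => ev s M (a0 x) m * ((fun _ => 1) m * ev s M (a0 x) m))) by (intros; ring).
        rewrite (bil s M x hs Hg).
        rewrite (sum_ext _ (fun k => (if Nat.even k then x k else 0) * 1))
          by (intros k Hk; rewrite <- (a0a0 s x Hnn k Hk); ring).
        rewrite even_part, E0, E1. field.
      * rewrite (inner_real M _ _ _ _ (ket1_eq s M x) (ket1_eq s M x)). f_equal.
        rewrite (sum_ext _ (fun m => ev s M (a1 x) m * ((fun _ => 1) m * ev s M (a1 x) m))) by (intros; ring).
        rewrite (bil s M x hs Hg).
        rewrite (sum_ext _ (fun k => (if Nat.even k then 0 else x k) * 1))
          by (intros k Hk; rewrite <- (a1a1 s x Hnn k Hk); ring).
        rewrite odd_part, E0, E1. field.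
      * rewrite (inner_real M _ _ _ _ (ket0_eq s M x) (ket1_eq s M x)). f_equal.
        rewrite (sum_ext _ (fun m => ev s M (a0 x) m * ((fun _ => 1) m * ev s M (a1 x) m))) by (intros; ring).
        rewrite (bil s M x hs Hg). apply sum_zero'. intros k Hk.
        replace (a0 x k * (a1 x k * 1)) with (a0 x k * a1 x k) by ring. apply a0a1.
      * intros Sm HS. apply (psp_main s M x hs Hg Hnn (hmom_of s hs M x Hx) Sm HS).
      * assert (HA : forall i j, (i <= M)%nat -> (j <= M)%nat ->
           mpow M (numop M) s i j = diagm (fun m => INR m ^ s) i j) by (intros; apply mpow_numop; auto).
        rewrite (inner_diag M _ _ _ _ (ev s M (a0 x)) (ev s M (a1 x)) HA (ket0_eq s M x) (ket1_eq s M x)).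
        f_equal. rewrite (bil s M x hs Hg). apply sum_zero'. intros k Hk.
        replace (a0 x k * (a1 x k * INR (nk s M k) ^ s)) with ((a0 x k * a1 x k) * INR (nk s M k) ^ s) by ring.
        rewrite a0a1. ring.
  -
    intros eps Heps.
    destruct (uniform_fin (fun M k => Rabs (solx (rn s M) s k - x_lim s k) < eps) s) as [N HN].
    { intros k Hk. apply (CV_eps _ _ (solx_cv s hs k Hk) eps Heps). }
    exists (max N (max Ng 1)). intros M x HM Hx k Hk.
    assert (Hg : gapP s M) by (exact (HNg M ltac:(lia))). assert (HM1 : (1 <= M)%nat) by lia.
    assert (Hinc := tn_incr_of_gap s hs M Hg).
    rewrite (proj1 (lsys_unique (tn s M) s x ltac:(lia) Hinc (lin_lsys s M x Hx)) k Hk).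
    rewrite (tn_fun s hs M HM1).
    rewrite (solx_scale s hs).
    + apply HN; auto; lia.
    + assert (0 < INR M) by (apply lt_0_INR; lia). lra.
    + auto.
    + apply rn_incr; auto.
  -
    intros eps Heps. destruct (CV_eps _ _ (Eseq_cv s hs) eps Heps) as [N HN].
    exists (max N (max Ng 1)). intros M x HM Hx.
    rewrite ratio_eq; auto; try lia. apply HN; lia. exact (HNg M ltac:(lia)).
  -
    intros M HM. destruct (min_dist_exists s M hs) as [r [Hr _]]. exists r. split; auto.
    assert (H := min_dist_le_kap s M hs HM r Hr). unfold kap in H. lra.
  -
    intros t Ht eps Heps.
    set (d := Rmin 1 (eps / 3)).
    assert (Hd : 0 < d) by (unfold d; apply Rmin_glb_lt; lra).
    assert (Hd1 : d <= 1) by apply Rmin_l.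
    assert (Hde : 3 * d <= eps) by (assert (d <= eps / 3) by apply Rmin_r; lra).
    destruct (CV_eps _ _ (Eseq_cv s hs) d Hd) as [N HN].
    exists (max N (max Ng 1)). intros M x r HM Hx Hr.
    assert (Hg : gapP s M) by (exact (HNg M ltac:(lia))). assert (HM1 : (1 <= M)%nat) by lia.
    assert (HMp : 0 < INR M) by (apply lt_0_INR; lia).
    set (K := 4 * (INR M / 4) ^ s).
    assert (HK : 0 < K) by (unfold K; apply Rmult_lt_0_compat; [lra|apply pow_lt; lra]).
    set (E := Eseq s M).
    assert (HE : Rabs (E - 1) < d) by (apply HN; lia).
    assert (Hden : (-1) ^ s * INR M ^ s * powerRZ 4 (1 - Z.of_nat s) = (-1) ^ s * K).
    { rewrite (powerRZ_4 s hs). unfold K. unfold Rdiv. rewrite Rpow_mult_distr, pow_inv.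
      assert (0 < 4 ^ s) by (apply pow_lt; lra). field. lra. }
    assert (Hsig : sig_diff s M x = (-1) ^ s * K * E).
    { assert (Hrat := ratio_eq s hs M x HM1 Hg Hx). fold E in Hrat. rewrite Hden in Hrat.
      rewrite <- Hrat. field. split; [lra|apply neg1_pow_nz]. }
    assert (Hsig2 : sig_diff s M x ^ 2 = E ^ 2 * K ^ 2).
    { rewrite Hsig. replace (((-1) ^ s * K * E) ^ 2) with (((-1) ^ s * (-1) ^ s) * E ^ 2 * K ^ 2) by ring.
      rewrite neg1_pow_sq. ring. }
    assert (HK2 : 16 * (INR M / 4) ^ (2 * s) = K ^ 2).
    { unfold K. replace (2 * s)%nat with (s + s)%nat by lia. rewrite pow_add. ring. }
    assert (Hlow : K * E <= 2 * r).
    { assert (H := sig_le_2r s hs M x r Hg Hx Hr). rewrite Hsig in H.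
      rewrite !Rabs_mult in H. rewrite <- RPow_abs in H.
      replace (Rabs (-1)) with 1 in H by (rewrite Rabs_left; lra). rewrite pow1, Rmult_1_l in H.
      rewrite (Rabs_pos_eq K) in H by lra.
      assert (E <= Rabs E) by apply RRle_abs. nra. }
    assert (Hup : 2 * r <= K).
    { assert (H := min_dist_le_kap s M hs HM1 r Hr). unfold kap in H. unfold K. lra. }
    destruct (GL K E r d eps HK Hd Hd1 Hde HE Hlow Hup) as [G1 [G2 G3]].
    assert (Hr0 : 0 < r).
    { apply Rabs_def2 in HE. destruct HE. nra. }
    assert (Ht2 : t ^ 2 <> 0) by (apply pow_nonzero; auto).
    split; [|split].
    + replace (t ^ 2 * sig_diff s M x ^ 2 / (4 * t ^ 2 * r ^ 2)) with (E ^ 2 * K ^ 2 / (4 * r ^ 2)); auto.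
      rewrite Hsig2. field; repeat split; first [exact Ht2 | exact Ht | apply Rgt_not_eq; lra | apply pow_nonzero; lra].
    + replace (t ^ 2 * sig_diff s M x ^ 2 / (16 * t ^ 2 * (INR M / 4) ^ (2 * s))) with (E ^ 2); auto.
      replace (16 * t ^ 2 * (INR M / 4) ^ (2 * s)) with (t ^ 2 * K ^ 2) by (rewrite <- HK2; ring).
      rewrite Hsig2. field; repeat split; first [exact Ht2 | exact Ht | apply Rgt_not_eq; lra | apply pow_nonzero; lra].
    + replace (4 * t ^ 2 * r ^ 2 / (16 * t ^ 2 * (INR M / 4) ^ (2 * s))) with (4 * r ^ 2 / K ^ 2); auto.
      replace (16 * t ^ 2 * (INR M / 4) ^ (2 * s)) with (t ^ 2 * K ^ 2) by (rewrite <- HK2; ring).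
      field; repeat split; first [exact Ht2 | exact Ht | apply Rgt_not_eq; lra | apply pow_nonzero; lra].
Qed.
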